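(* Let $q>1$ and $0\le M_0<M$. Let $u$ be a sufficiently smooth $L$-periodic (in $x$) solution of $u_t=-\alpha u u_x+\beta u_{xxx}$ on $[0,T]\times\mathbb{R}$, and let $r>\sup_{t,x}|u(t,x)|$. Suppose $u^{(0)}_k=u(0,k\Delta x)$ for all $k$, that $u^{(0)},\dots,u^{(M_0)}$ are obtained successively as solutions of the scheme (each $u^{(n+1)}$ a solution at step $n$), that $r\ge \max_{m'\le M_0}\|u^{(m')}\|_\infty$, that $\Delta t<\min\{\varepsilon_1(q,r,\Delta x),\varepsilon_2(q,r,\Delta x)\}$, and let $u^{(M_0+1)}$ be the unique solution of the scheme at step $M_0$ with $\|u^{(M_0+1)}\|_\infty\le qr$ (which exists under these hypotheses). Then there is a constant $C=C(q,r)>0$ independent of $\Delta t$ and $\Delta x$ such that, for sufficiently small $\Delta t\le\Delta x$, $$\|e^{(m)}\|_{H^1} = \big(\|e^{(m)}\|^2+\|\delta^+_x e^{(m)}\|^2\big)^{1/2}\le C\big((\Delta t)^2+(\Delta x)^2\big)\qquad (m=0,1,\dots,M_0+1).$$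
   Context: $L>0$, $K$ a positive integer, $\Delta x=L/K$; $T>0$, $M$ a positive integer, $\Delta t=T/M$; $\alpha\in\mathbb{R}$, $\beta\in\mathbb{R}\setminus\{0\}$. Grid functions are real sequences $v=(v_k)_{k\in\mathbb{Z}}$ with $v_{k+K}=v_k$. Define $\delta^+_x v_k=(v_{k+1}-v_k)/\Delta x$, $\delta^{\langle 1\rangle}_x v_k = (v_{k+1}-v_{k-1})/(2\Delta x)$, $\delta^{\langle 2\rangle}_x v_k = (v_{k+1}-2v_k+v_{k-1})/(\Delta x)^2$, $\|v\|=(\sum_{k=1}^K v_k^2\Delta x)^{1/2}$, $\|v\|_\infty=\max_k|v_k|$. For a sequence of grid functions $v^{(n)}$, $\delta^+_t v^{(n)}_k = (v^{(n+1)}_k - v^{(n)}_k)/\Delta t$, $\mu^+_t v^{(n)}_k = (v^{(n+1)}_k+v^{(n)}_k)/2$. Given $u^{(n)}$, $u^{(n+1)}$ is a solution of the scheme at step $n$ if for all $k$ $$\delta^+_t u^{(n)}_k = -\frac{\alpha}{6}\,\delta^{\langle 1\rangle}_x\Big\{(u^{(n+1)}_k)^2 + u^{(n+1)}_k u^{(n)}_k + (u^{(n)}_k)^2\Big\} + \beta\,\delta^{\langle 1\rangle}_x\delta^{\langle 2\rangle}_x \mu^+_t u^{(n)}_k .$$ $\varepsilon_1(q,r,\Delta x) = (q-1)(\Delta x)^3[\frac{|\alpha|}{6}(\Delta x)^2(q^2+q+1)r + \frac{3}{2}|\beta|(q+1)]^{-1}$, $\varepsilon_2(q,r,\Delta x)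 = (\Delta x)^3[\frac{|\alpha|}{6}(\Delta x)^2(2q+1)r + \frac{3}{2}|\beta|]^{-1}$. Exact grid values $\tilde u^{(m)}_k=u(m\Delta t,k\Delta x)$, error $e^{(m)}=u^{(m)}-\tilde u^{(m)}$. *)

(* Defs.v *)
From Stdlib Require Import Reals Lra Lia ZArith List.
From Coquelicot Require Import Coquelicot.
Open Scope R_scope.

(* Grid functions: v : Z -> R, periodic with period K. *)
Definition grid := Z -> R.

Definition dplus_x (dx : R) (v : grid) : grid :=
  fun k => (v (k + 1)%Z - v k) / dx.
Definition d1_x (dx : R) (v : grid) : grid :=
  fun k => (v (k + 1)%Z - v (k - 1)%Z) / (2 * dx).
Definition d2_x (dx : R) (v : grid) : grid :=
  fun k => (v (k + 1)%Z - 2 * v k + v (k - 1)%Z) / (dx ^ 2).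

Definition gnorm (K : nat) (dx : R) (v : grid) : R :=
  sqrt (sum_f_R0 (fun i => (v (Z.of_nat (S i))) ^ 2 * dx) (K - 1)%nat).

(* ||v||_inf = max_{k=1..K} |v_k| (= max over all k by periodicity) *)
Definition gnorm_inf (K : nat) (v : grid) : R :=
  fold_right Rmax 0 (map (fun i => Rabs (v (Z.of_nat i))) (seq 1 K)).

Definition gnorm_H1 (K : nat) (dx : R) (v : grid) : R :=
  sqrt (gnorm K dx v ^ 2 + gnorm K dx (dplus_x dx v) ^ 2).

Definition scheme_step (alpha beta dx dt : R) (u0 u1 : grid) : Prop :=
  forall k : Z,
    (u1 k - u0 k) / dt =
      - (alpha / 6) * d1_x dx (fun j => (u1 j) ^ 2 + u1 j * u0 j + (u0 j) ^ 2) k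
      + beta * d1_x dx (d2_x dx (fun j => (u1 j + u0 j) / 2)) k.

Definition scheme_eps1 (alpha beta q r dx : R) : R :=
  (q - 1) * dx ^ 3 /
    (Rabs alpha / 6 * dx ^ 2 * (q ^ 2 + q + 1) * r + 3 / 2 * Rabs beta * (q + 1)).
Definition scheme_eps2 (alpha beta q r dx : R) : R :=
  dx ^ 3 / (Rabs alpha / 6 * dx ^ 2 * (2 * q + 1) * r + 3 / 2 * Rabs beta).

Definition smooth2 (u : R -> R -> R) : Prop :=
  exists D : nat -> nat -> R -> R -> R,
    D O O = u /\
    forall (i j : nat) (t x : R),
      is_derive (fun s => D i j s x) t (D (S i) j t x) /\
      is_derive (fun y => D i j t y) x (D i (S j) t x) /\
      continuous (fun p : R * R => D i j (fst p) (snd p)) (t, x).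

(* Main.v *)
Require Import Defs.
From Stdlib Require Import Reals Lra Lia ZArith List Classical ClassicalEpsilon FunctionalExtensionality.
From Coquelicot Require Import Coquelicot.
Open Scope R_scope.
Set Bullet Behavior "Strict Subproofs".

Definition tower_n (n : nat) (F : nat -> R -> R) : Prop :=
  forall k, (k < n)%nat -> forall s, is_derive (F k) s (F (S k) s).

Lemma tower_Derive_n n F : tower_n n F ->
  forall k, (k <= n)%nat -> forall s, Derive_n (F O) k s = F k s.
Proof.
  intros HT k. induction k as [|k IH]; intros Hk s; [reflexivity|].
  simpl. rewrite (Derive_ext _ (F k)).
  - apply is_derive_unique. apply HT. lia.
  - intros t. apply IH. lia.
Qed.

Lemma tower_ex_derive_n n F : tower_n n F ->
  forall k, (k <= n)%nat -> forall s, ex_derive_n (F O) k s.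
Proof.
  intros HT k. destruct k as [|k]; intros Hk s; [exact I|].
  simpl. apply ex_derive_ext with (F k).
  - intros t. symmetry. apply (tower_Derive_n n); auto. lia.
  - exists (F (S k) s). apply HT. lia.
Qed.

Lemma taylor_pos p F c h M : tower_n (S p) F -> 0 < h ->
  (forall s, c <= s <= c + h -> Rabs (F (S p) s) <= M) ->
  Rabs (F O (c + h) - sum_f_R0 (fun m => h ^ m / INR (fact m) * F m c) p)
    <= M * h ^ (S p) / INR (fact (S p)).
Proof.
  intros HT Hh HM.
  destruct (Taylor_Lagrange (F O) p c (c + h)) as [z [Hz Heq]].
  - lra.
  - intros t _ k Hk. apply (tower_ex_derive_n (S p)); auto.
  - replace (c + h - c) with h in Heq by ring.
    rewrite Heq.
    rewrite (sum_eq _ (fun m => h ^ m / INR (fact m) * F m c)).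
    2:{ intros i Hi. rewrite (tower_Derive_n (S p) F HT i) by lia. reflexivity. }
    rewrite (tower_Derive_n (S p) F HT (S p)) by lia.
    replace (sum_f_R0 (fun m : nat => h ^ m / INR (fact m) * F m c) p +
      h ^ S p / INR (fact (S p)) * F (S p) z -
      sum_f_R0 (fun m : nat => h ^ m / INR (fact m) * F m c) p)
      with (h ^ S p / INR (fact (S p)) * F (S p) z) by ring.
    assert (Hf : 0 < INR (fact (S p))) by (apply lt_0_INR; apply lt_O_fact).
    assert (Hp : 0 < h ^ S p) by (apply pow_lt; lra).
    rewrite Rabs_mult. rewrite Rabs_pos_eq.
    2:{ apply Rlt_le. apply Rdiv_lt_0_compat; lra. }
    assert (Hb := HM z ltac:(lra)).
    apply Rle_trans with (h ^ S p / INR (fact (S p)) * M).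
    + apply Rmult_le_compat_l; [|exact Hb]. apply Rlt_le, Rdiv_lt_0_compat; lra.
    + right. field. lra.
Qed.

Definition refl_tower (F : nat -> R -> R) : nat -> R -> R :=
  fun k s => (-1) ^ k * F k (- s).

Lemma is_derive_neg_arg (f : R -> R) s df :
  is_derive f (- s) df -> is_derive (fun x => f (- x)) s (- df).
Proof.
  intros H.
  assert (H2 : is_derive (fun x : R => - x) s (-1)).
  { auto_derive; [exact I| ring]. }
  pose proof (is_derive_comp f (fun x => - x) s df (-1) H H2) as H3.
  simpl in H3. unfold scal in H3; simpl in H3. unfold mult in H3; simpl in H3.
  replace (- df) with (-1 * df) by ring. exact H3.
Qed.

Lemma refl_tower_ok n F : tower_n n F -> tower_n n (refl_tower F).
Proof.
  intros HT k Hk s. unfold refl_tower.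
  replace ((-1) ^ S k * F (S k) (- s)) with ((-1) ^ k * (- F (S k) (- s))) by (simpl; ring).
  apply is_derive_scal. apply (is_derive_neg_arg (F k)). apply HT; auto.
Qed.

Lemma taylor_neg p F c h M : tower_n (S p) F -> 0 < h ->
  (forall s, c - h <= s <= c -> Rabs (F (S p) s) <= M) ->
  Rabs (F O (c - h) - sum_f_R0 (fun m => (- h) ^ m / INR (fact m) * F m c) p)
    <= M * h ^ (S p) / INR (fact (S p)).
Proof.
  intros HT Hh HM.
  pose proof (taylor_pos p (refl_tower F) (- c) h M (refl_tower_ok _ _ HT) Hh) as H.
  unfold refl_tower in H.
  replace (- (- c + h)) with (c - h) in H by ring.
  rewrite (sum_eq _ (fun m => (- h) ^ m / INR (fact m) * F m c)) in H.
  - simpl pow in H at 1. rewrite Rmult_1_l in H. apply H.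
    intros s Hs. rewrite Rabs_mult. rewrite Rabs_mult, Rabs_m1, pow_1_abs. rewrite !Rmult_1_l. apply HM. lra.
  - intros i _. rewrite Ropp_involutive.
    replace (- h) with ((-1) * h) by ring. rewrite Rpow_mult_distr. field.
    apply not_0_INR. apply fact_neq_0.
Qed.

Lemma abs_le_inv x b : Rabs x <= b -> - b <= x <= b.
Proof. unfold Rabs; destruct Rcase_abs; lra. Qed.

Lemma abs_div_bound x d B : 0 < d -> Rabs x <= B * d -> Rabs (x / d) <= B.
Proof.
  intros Hd H. unfold Rdiv. rewrite Rabs_mult, Rabs_inv, (Rabs_pos_eq d) by lra.
  apply Rmult_le_reg_r with d; auto.
  rewrite Rmult_assoc, Rinv_l by lra. lra.
Qed.

Lemma fact_vals : INR (fact 0) = 1 /\ INR (fact 1) = 1 /\ INR (fact 2) = 2 /\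
  INR (fact 3) = 6 /\ INR (fact 4) = 24 /\ INR (fact 5) = 120.
Proof. repeat split; simpl; ring. Qed.

Lemma tower_n_le n m F : (m <= n)%nat -> tower_n n F -> tower_n m F.
Proof. intros H HT k Hk s. apply HT. lia. Qed.

Lemma mvt_bound F a b M : tower_n 1 F -> a <= b ->
  (forall s, a <= s <= b -> Rabs (F 1%nat s) <= M) ->
  Rabs (F O b - F O a) <= M * (b - a).
Proof.
  intros HT Hab HM. destruct (Req_dec a b) as [E|E].
  - subst. replace (F 0%nat b - F 0%nat b) with 0 by ring. rewrite Rabs_R0.
    replace (b - b) with 0 by ring. lra.
  - pose proof (taylor_pos 0 F a (b - a) M HT ltac:(lra)) as H.
    replace (a + (b - a)) with b in H by ring.
    cbn [sum_f_R0] in H. destruct fact_vals as [f0 [f1 _]].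
    rewrite f0, f1 in H.
    assert (H' := H ltac:(intros s Hs; apply HM; lra)).
    apply abs_le_inv in H'. apply Rabs_le. simpl in H'. lra.
Qed.

Lemma avg_bound F c h M : tower_n 2 F -> 0 < h ->
  (forall s, c - h <= s <= c + h -> Rabs (F 2%nat s) <= M) ->
  Rabs ((F O (c + h) + F O (c - h)) / 2 - F O c) <= M * h ^ 2 / 2.
Proof.
  intros HT Hh HM.
  pose proof (taylor_pos 1 F c h M HT Hh ltac:(intros; apply HM; lra)) as H1.
  pose proof (taylor_neg 1 F c h M HT Hh ltac:(intros; apply HM; lra)) as H2.
  cbn [sum_f_R0] in H1, H2. destruct fact_vals as [f0 [f1 [f2 _]]].
  rewrite f0, f1, f2 in H1, H2.
  apply abs_le_inv in H1. apply abs_le_inv in H2. apply Rabs_le.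
  simpl in H1, H2 |- *. lra.
Qed.

Lemma cen_bound F c h M : tower_n 3 F -> 0 < h ->
  (forall s, c - h <= s <= c + h -> Rabs (F 3%nat s) <= M) ->
  Rabs ((F O (c + h) - F O (c - h)) / (2 * h) - F 1%nat c) <= M * h ^ 2 / 6.
Proof.
  intros HT Hh HM.
  pose proof (taylor_pos 2 F c h M HT Hh ltac:(intros; apply HM; lra)) as H1.
  pose proof (taylor_neg 2 F c h M HT Hh ltac:(intros; apply HM; lra)) as H2.
  cbn [sum_f_R0] in H1, H2. destruct fact_vals as [f0 [f1 [f2 [f3 _]]]].
  rewrite f0, f1, f2, f3 in H1, H2.
  set (R1 := F 0%nat (c + h) - (h ^ 0 / 1 * F 0%nat c + h ^ 1 / 1 * F 1%nat c + h ^ 2 / 2 * F 2%nat c)) in H1.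
  set (R2 := F 0%nat (c - h) - ((- h) ^ 0 / 1 * F 0%nat c + (- h) ^ 1 / 1 * F 1%nat c + (- h) ^ 2 / 2 * F 2%nat c)) in H2.
  replace ((F 0%nat (c + h) - F 0%nat (c - h)) / (2 * h) - F 1%nat c) with ((R1 - R2) / (2 * h))
    by (unfold R1, R2; simpl; field; lra).
  apply abs_div_bound; [lra|].
  apply abs_le_inv in H1. apply abs_le_inv in H2. apply Rabs_le.
  simpl in H1, H2 |- *. nra.
Qed.

Lemma d3_bound F c h M : tower_n 5 F -> 0 < h ->
  (forall s, c - 2 * h <= s <= c + 2 * h -> Rabs (F 5%nat s) <= M) ->
  Rabs ((F O (c + 2 * h) - 2 * F O (c + h) + 2 * F O (c - h) - F O (c - 2 * h)) / (2 * h ^ 3)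
     - F 3%nat c) <= M * h ^ 2 / 3.
Proof.
  intros HT Hh HM.
  pose proof (taylor_pos 4 F c h M HT Hh ltac:(intros; apply HM; lra)) as H1.
  pose proof (taylor_neg 4 F c h M HT Hh ltac:(intros; apply HM; lra)) as H2.
  pose proof (taylor_pos 4 F c (2 * h) M HT ltac:(lra) ltac:(intros; apply HM; lra)) as H3.
  pose proof (taylor_neg 4 F c (2 * h) M HT ltac:(lra) ltac:(intros; apply HM; lra)) as H4.
  cbn [sum_f_R0] in H1, H2, H3, H4. destruct fact_vals as [f0 [f1 [f2 [f3 [f4 f5]]]]].
  rewrite f0, f1, f2, f3, f4, f5 in H1, H2, H3, H4.
  match type of H1 with Rabs ?x <= _ => set (R1 := x) in H1 end.
  match type of H2 with Rabs ?x <= _ => set (R2 := x) in H2 end.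
  match type of H3 with Rabs ?x <= _ => set (R3 := x) in H3 end.
  match type of H4 with Rabs ?x <= _ => set (R4 := x) in H4 end.
  assert (Hh3 : 0 < h ^ 3) by (apply pow_lt; lra).
  replace ((F 0%nat (c + 2 * h) - 2 * F 0%nat (c + h) + 2 * F 0%nat (c - h) - F 0%nat (c - 2 * h)) / (2 * h ^ 3) - F 3%nat c)
    with ((R3 - 2 * R1 + 2 * R2 - R4) / (2 * h ^ 3))
    by (unfold R1, R2, R3, R4; simpl; field; lra).
  apply abs_div_bound; [lra|].
  apply abs_le_inv in H1. apply abs_le_inv in H2. apply abs_le_inv in H3. apply abs_le_inv in H4.
  apply Rabs_le.
  assert (Hm : 0 <= M) by (specialize (HM c ltac:(lra)); pose proof (Rabs_pos (F 5%nat c)); lra).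
  assert (E5 : (2 * h) ^ 5 = 32 * h ^ 5) by ring.
  assert (E6 : h ^ 5 = h ^ 2 * h ^ 3) by ring.
  rewrite E5 in H3, H4. rewrite E6 in H1, H2, H3, H4.
  assert (0 <= M * h ^ 2) by (apply Rmult_le_pos; [lra| apply pow_le; lra]).
  simpl pow in H1, H2, H3, H4 |- *. nra.
Qed.

Definition tower2 (E : nat -> nat -> R -> R -> R) : Prop :=
  forall i j t x, is_derive (fun s => E i j s x) t (E (S i) j t x) /\
                  is_derive (fun y => E i j t y) x (E i (S j) t x).

Definition bnd (E : nat -> nat -> R -> R -> R) (T : R) (J : nat) (Mb : R) : Prop :=
  forall i j t x, (i <= 3)%nat -> (j <= J)%nat -> 0 <= t <= T -> Rabs (E i j t x) <= Mb.

Definition tt (E : nat -> nat -> R -> R -> R) i j x : nat -> R -> R :=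
  fun k s => E (k + i)%nat j s x.
Definition xt (E : nat -> nat -> R -> R -> R) i j t : nat -> R -> R :=
  fun k y => E i (k + j)%nat t y.

Lemma tower_tt E i j x n : tower2 E -> tower_n n (tt E i j x).
Proof. intros H k _ s. unfold tt. apply H. Qed.
Lemma tower_xt E i j t n : tower2 E -> tower_n n (xt E i j t).
Proof. intros H k _ s. unfold xt. apply H. Qed.

Definition V (E : nat -> nat -> R -> R -> R) i j t x c := E i j t (x + c).

Definition d3v E t x h :=
  (V E 0 0 t x (2 * h) - 2 * V E 0 0 t x h + 2 * V E 0 0 t x (- h) - V E 0 0 t x (- (2 * h)))
    / (2 * h ^ 3).

Definition Tlin E tm ht h beta x :=
  (V E 0 0 (tm + ht) x 0 - V E 0 0 (tm - ht) x 0) / (2 * ht) - V E 1 0 tm x 0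
  - beta * ((d3v E (tm + ht) x h + d3v E (tm - ht) x h) / 2 - V E 0 3 tm x 0).

Lemma Tlin_bound E T J Mb tm ht h beta x : tower2 E -> bnd E T J Mb -> (5 <= J)%nat ->
  0 < ht -> 0 < h -> 0 <= tm - ht -> tm + ht <= T ->
  Rabs (Tlin E tm ht h beta x) <= Mb * ht ^ 2 / 6 + Rabs beta * (Mb * h ^ 2 / 3 + Mb * ht ^ 2 / 2).
Proof.
  intros HE HB HJ Hht Hh H0 HT. unfold Tlin.
  assert (A1 := cen_bound (tt E 0 0 (x + 0)) tm ht Mb (tower_tt _ _ _ _ _ HE) Hht
     ltac:(intros s Hs; unfold tt; apply HB; lia || lra)).
  assert (A2 := d3_bound (xt E 0 0 (tm + ht)) (x + 0) h Mb (tower_xt _ _ _ _ _ HE) Hh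
     ltac:(intros s Hs; unfold xt; apply HB; lia || lra)).
  assert (A3 := d3_bound (xt E 0 0 (tm - ht)) (x + 0) h Mb (tower_xt _ _ _ _ _ HE) Hh
     ltac:(intros s Hs; unfold xt; apply HB; lia || lra)).
  assert (A4 := avg_bound (tt E 0 3 (x + 0)) tm ht Mb (tower_tt _ _ _ _ _ HE) Hht
     ltac:(intros s Hs; unfold tt; apply HB; lia || lra)).
  unfold tt, xt in A1, A2, A3, A4. simpl Nat.add in A1, A2, A3, A4.
  unfold d3v, V.
  replace (x + 2 * h) with (x + 0 + 2 * h) by ring.
  replace (x + h) with (x + 0 + h) by ring.
  replace (x + - h) with (x + 0 - h) by ring.
  replace (x + - (2 * h)) with (x + 0 - 2 * h) by ring.
  set (a1 := (E 0%nat 0%nat (tm + ht) (x + 0) - E 0%nat 0%nat (tm - ht) (x + 0)) / (2 * ht) - E 1%nat 0%nat tm (x + 0)) in *.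
  match type of A2 with Rabs (?q - _) <= _ => set (q2 := q) in * end.
  match type of A3 with Rabs (?q - _) <= _ => set (q3 := q) in * end.
  match type of A4 with Rabs (?q - _) <= _ => set (q4 := q) in * end.
  assert (HZ : Rabs ((q2 + q3) / 2 - E 0%nat 3%nat tm (x + 0)) <= Mb * h ^ 2 / 3 + Mb * ht ^ 2 / 2).
  { apply abs_le_inv in A2. apply abs_le_inv in A3. apply abs_le_inv in A4.
    apply Rabs_le. unfold q4 in A4. lra. }
  eapply Rle_trans. apply Rabs_triang. rewrite Rabs_Ropp.
  apply Rplus_le_compat. exact A1.
  rewrite Rabs_mult. apply Rmult_le_compat_l. apply Rabs_pos. exact HZ.
Qed.

Lemma isd_plus (f g : R -> R) x df dg : is_derive f x df -> is_derive g x dg ->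
  is_derive (fun y => f y + g y) x (df + dg).
Proof. intros. apply (is_derive_plus f g x df dg); auto. Qed.
Lemma isd_minus (f g : R -> R) x df dg : is_derive f x df -> is_derive g x dg ->
  is_derive (fun y => f y - g y) x (df - dg).
Proof. intros. apply (is_derive_minus f g x df dg); auto. Qed.
Lemma isd_mult (f g : R -> R) x df dg : is_derive f x df -> is_derive g x dg ->
  is_derive (fun y => f y * g y) x (df * g x + f x * dg).
Proof. intros. apply (is_derive_mult f g x df dg); auto. intros; apply Rmult_comm. Qed.
Lemma isd_scal (f : R -> R) c x df : is_derive f x df ->
  is_derive (fun y => c * f y) x (c * df).
Proof. intros. apply is_derive_scal; auto. Qed.
Lemma isd_eq (f : R -> R) x d1 d2 : is_derive f x d1 -> d1 = d2 -> is_derive f x d2.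
Proof. intros H ->; exact H. Qed.

Lemma mvt_glob (G0 G1 : R -> R) B a b : (forall y, is_derive G0 y (G1 y)) ->
  (forall y, Rabs (G1 y) <= B) -> a <= b -> Rabs (G0 b - G0 a) <= B * (b - a).
Proof.
  intros HD HB Hab.
  apply (mvt_bound (fun k => match k with O => G0 | _ => G1 end) a b B); auto.
  intros k Hk s. destruct k; [|lia]. apply HD.
Qed.

Lemma prod_diff g1 k1 g2 k2 h Ga Kb Gd Kd : 0 < h ->
  Rabs g1 <= Ga -> Rabs k2 <= Kb -> Rabs (k1 - k2) <= Kd * (2 * h) ->
  Rabs (g1 - g2) <= Gd * (2 * h) ->
  Rabs ((g1 * k1 - g2 * k2) / (2 * h)) <= Ga * Kd + Kb * Gd.
Proof.
  intros Hh H1 H2 H3 H4. apply abs_div_bound; [lra|].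
  replace (g1 * k1 - g2 * k2) with (g1 * (k1 - k2) + k2 * (g1 - g2)) by ring.
  eapply Rle_trans. apply Rabs_triang. rewrite !Rabs_mult.
  assert (0 <= Rabs g1) by apply Rabs_pos. assert (0 <= Rabs k2) by apply Rabs_pos.
  assert (0 <= Rabs (k1 - k2)) by apply Rabs_pos. assert (0 <= Rabs (g1 - g2)) by apply Rabs_pos.
  assert (Rabs g1 * Rabs (k1 - k2) <= Ga * (Kd * (2 * h))) by (apply Rmult_le_compat; lra).
  assert (Rabs k2 * Rabs (g1 - g2) <= Kb * (Gd * (2 * h))) by (apply Rmult_le_compat; lra).
  lra.
Qed.

Lemma tdiff_bound E T J Mb i j t1 t2 y : tower2 E -> bnd E T J Mb -> (i <= 2)%nat -> (j <= J)%nat ->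
  0 <= t1 -> t1 <= t2 -> t2 <= T -> Rabs (E i j t2 y - E i j t1 y) <= Mb * (t2 - t1).
Proof.
  intros HE HB Hi Hj H1 H2 H3.
  apply (mvt_bound (tt E i j y) t1 t2 Mb (tower_tt _ _ _ _ _ HE) H2).
  intros s Hs. unfold tt. simpl. apply HB; lia || lra.
Qed.

Lemma tavg_bound E T J Mb i j tm ht y : tower2 E -> bnd E T J Mb -> (i <= 1)%nat -> (j <= J)%nat ->
  0 < ht -> 0 <= tm - ht -> tm + ht <= T ->
  Rabs (E i j (tm + ht) y + E i j (tm - ht) y - 2 * E i j tm y) <= Mb * ht ^ 2.
Proof.
  intros HE HB Hi Hj H1 H2 H3.
  pose proof (avg_bound (tt E i j y) tm ht Mb (tower_tt _ _ _ _ _ HE) H1) as H.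
  unfold tt in H. simpl Nat.add in H.
  replace (E i j (tm + ht) y + E i j (tm - ht) y - 2 * E i j tm y)
    with (2 * ((E i j (tm + ht) y + E i j (tm - ht) y) / 2 - E i j tm y)) by field.
  rewrite Rabs_mult, Rabs_pos_eq by lra.
  assert (H' := H ltac:(intros s Hs; apply HB; lia || lra)). lra.
Qed.

Definition lin3 (E : nat -> nat -> R -> R -> R) j ta tb tc ca cb cc y :=
  ca * E 0%nat j ta y + cb * E 0%nat j tb y + cc * E 0%nat j tc y.

Lemma lin3_diff E j ta tb tc ca cb cc B x h : tower2 E -> 0 < h ->
  (forall y, Rabs (lin3 E (S j) ta tb tc ca cb cc y) <= B) ->
  Rabs (lin3 E j ta tb tc ca cb cc (x + h) - lin3 E j ta tb tc ca cb cc (x - h)) <= B * (2 * h).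
Proof.
  intros HE Hh HB.
  replace (2 * h) with (x + h - (x - h)) by ring.
  apply mvt_glob with (G1 := lin3 E (S j) ta tb tc ca cb cc); auto; [|lra].
  intros y. unfold lin3.
  apply isd_plus; [apply isd_plus|]; apply isd_scal; apply HE.
Qed.

Definition Pt (E F : nat -> nat -> R -> R -> R) t (k : nat) (y : R) : R :=
  match k with
  | O => E 0%nat 0%nat t y * F 0%nat 0%nat t y
  | 1%nat => E 0%nat 1%nat t y * F 0%nat 0%nat t y + E 0%nat 0%nat t y * F 0%nat 1%nat t y
  | 2%nat => E 0%nat 2%nat t y * F 0%nat 0%nat t y + 2 * (E 0%nat 1%nat t y * F 0%nat 1%nat t y)
             + E 0%nat 0%nat t y * F 0%nat 2%nat t y
  | _ => E 0%nat 3%nat t y * F 0%nat 0%nat t y + 3 * (E 0%nat 2%nat t y * F 0%nat 1%nat t y)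
         + 3 * (E 0%nat 1%nat t y * F 0%nat 2%nat t y) + E 0%nat 0%nat t y * F 0%nat 3%nat t y
  end.

Lemma Pt_tower E F t : tower2 E -> tower2 F -> tower_n 3 (Pt E F t).
Proof.
  intros HE HF k Hk s.
  destruct k as [|[|[|k]]]; [| | |lia]; unfold Pt.
  - apply isd_mult; [apply (proj2 (HE _ _ _ _)) | apply (proj2 (HF _ _ _ _))].
  - eapply isd_eq. 
    { apply isd_plus; apply isd_mult; first [exact (proj2 (HE _ _ _ _)) | exact (proj2 (HF _ _ _ _))]. }
    match goal with |- ?a = ?b => change (@eq R a b) end. ring.
  - eapply isd_eq. 
    { apply isd_plus; [apply isd_plus|].
      - apply isd_mult; first [exact (proj2 (HE _ _ _ _)) | exact (proj2 (HF _ _ _ _))].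
      - apply (isd_scal (fun y => E 0%nat 1%nat t y * F 0%nat 1%nat t y)).
        apply isd_mult; first [exact (proj2 (HE _ _ _ _)) | exact (proj2 (HF _ _ _ _))].
      - apply isd_mult; first [exact (proj2 (HE _ _ _ _)) | exact (proj2 (HF _ _ _ _))]. }
    match goal with |- ?a = ?b => change (@eq R a b) end. ring.
Qed.

Lemma abs_prod_le a b Ma Mb' : Rabs a <= Ma -> Rabs b <= Mb' -> Rabs (a * b) <= Ma * Mb'.
Proof. intros. rewrite Rabs_mult. apply Rmult_le_compat; auto; apply Rabs_pos. Qed.

Definition Nt (E F : nat -> nat -> R -> R -> R) tm ht x c :=
  V E 0 0 (tm + ht) x c * V F 0 0 (tm + ht) x c
  + (V E 0 0 (tm + ht) x c * V F 0 0 (tm - ht) x c + V E 0 0 (tm - ht) x c * V F 0 0 (tm + ht) x c) / 2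
  + V E 0 0 (tm - ht) x c * V F 0 0 (tm - ht) x c.

Definition Tnl E F tm ht h x :=
  (Nt E F tm ht x h - Nt E F tm ht x (- h)) / (6 * (2 * h))
  - (E 0%nat 0%nat tm x * F 0%nat 1%nat tm x + E 0%nat 1%nat tm x * F 0%nat 0%nat tm x) / 2.


Lemma abs4 a b c d : Rabs (a + 3 * b + 3 * c + d) <= Rabs a + 3 * Rabs b + 3 * Rabs c + Rabs d.
Proof.
  eapply Rle_trans. apply Rabs_triang. eapply Rle_trans. apply Rplus_le_compat_r. apply Rabs_triang.
  eapply Rle_trans. apply Rplus_le_compat_r. apply Rplus_le_compat_r. apply Rabs_triang.
  rewrite !Rabs_mult. rewrite (Rabs_pos_eq 3) by lra. lra.
Qed.

Section LinBounds.
Variables (E : nat -> nat -> R -> R -> R) (T : R) (J : nat) (Mb tm ht : R).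
Hypotheses (HE : tower2 E) (HB : bnd E T J Mb) (Hht : 0 < ht) (H0 : 0 <= tm - ht) (HT : tm + ht <= T).

Lemma lin3_sig j y : (j <= J)%nat -> Rabs (lin3 E j (tm + ht) (tm - ht) tm 1 1 (-2) y) <= Mb * ht ^ 2.
Proof.
  intros Hj. unfold lin3.
  replace (1 * E 0%nat j (tm + ht) y + 1 * E 0%nat j (tm - ht) y + -2 * E 0%nat j tm y)
    with (E 0%nat j (tm + ht) y + E 0%nat j (tm - ht) y - 2 * E 0%nat j tm y) by ring.
  apply (tavg_bound E T J Mb 0 j tm ht y); auto.
Qed.

Lemma lin3_alp j y : (j <= J)%nat -> Rabs (lin3 E j (tm + ht) tm tm 1 (-1) 0 y) <= Mb * ht.
Proof.
  intros Hj. unfold lin3.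
  replace (1 * E 0%nat j (tm + ht) y + -1 * E 0%nat j tm y + 0 * E 0%nat j tm y)
    with (E 0%nat j (tm + ht) y - E 0%nat j tm y) by ring.
  replace ht with ((tm + ht) - tm) at 2 by ring.
  apply (tdiff_bound E T J Mb 0 j tm (tm + ht) y); auto; lra.
Qed.

Lemma lin3_bet j y : (j <= J)%nat -> Rabs (lin3 E j (tm - ht) tm tm 1 (-1) 0 y) <= Mb * ht.
Proof.
  intros Hj. unfold lin3.
  replace (1 * E 0%nat j (tm - ht) y + -1 * E 0%nat j tm y + 0 * E 0%nat j tm y)
    with (- (E 0%nat j tm y - E 0%nat j (tm - ht) y)) by ring.
  rewrite Rabs_Ropp.
  replace ht with (tm - (tm - ht)) at 2 by ring.
  apply (tdiff_bound E T J Mb 0 j (tm - ht) tm y); auto; lra.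
Qed.

Lemma lin3_mid j y : (j <= J)%nat -> Rabs (lin3 E j tm tm tm 1 0 0 y) <= Mb.
Proof.
  intros Hj. unfold lin3.
  replace (1 * E 0%nat j tm y + 0 * E 0%nat j tm y + 0 * E 0%nat j tm y) with (E 0%nat j tm y) by ring.
  apply HB; lia || lra.
Qed.
End LinBounds.

Lemma prod_lin3 E F ta tb tc ca cb cc sa sb sc da db dc x h G Gd Kb Kd :
  tower2 E -> tower2 F -> 0 < h ->
  (forall y, Rabs (lin3 E 0 ta tb tc ca cb cc y) <= G) ->
  (forall y, Rabs (lin3 E 1 ta tb tc ca cb cc y) <= Gd) ->
  (forall y, Rabs (lin3 F 0 sa sb sc da db dc y) <= Kb) ->
  (forall y, Rabs (lin3 F 1 sa sb sc da db dc y) <= Kd) ->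
  Rabs ((lin3 E 0 ta tb tc ca cb cc (x + h) * lin3 F 0 sa sb sc da db dc (x + h)
       - lin3 E 0 ta tb tc ca cb cc (x + - h) * lin3 F 0 sa sb sc da db dc (x + - h)) / (2 * h))
  <= G * Kd + Kb * Gd.
Proof.
  intros HE HF Hh H1 H2 H3 H4.
  apply prod_diff; auto.
  - apply (lin3_diff F 0 sa sb sc da db dc Kd x h HF Hh H4).
  - apply (lin3_diff E 0 ta tb tc ca cb cc Gd x h HE Hh H2).
Qed.

Lemma Tnl_bound E F T J Mb tm ht h x : tower2 E -> tower2 F -> bnd E T J Mb -> bnd F T J Mb ->
  (3 <= J)%nat -> 0 < ht -> 0 < h -> 0 <= tm - ht -> tm + ht <= T ->
  Rabs (Tnl E F tm ht h x) <= Mb * Mb * (h ^ 2 + 2 * ht ^ 2).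
Proof.
  intros HE HF HBE HBF HJ Hht Hh H0 HT.
  assert (Htm : 0 <= tm <= T) by lra.
  assert (X1 : Rabs ((Pt E F tm 0 (x + h) - Pt E F tm 0 (x - h)) / (2 * h) - Pt E F tm 1 x)
     <= 8 * (Mb * Mb) * h ^ 2 / 6).
  { apply (cen_bound (Pt E F tm) x h (8 * (Mb * Mb)) (Pt_tower E F tm HE HF) Hh).
    intros s _. unfold Pt.
    assert (forall a b, (a <= 3)%nat -> (b <= 3)%nat -> Rabs (E 0%nat a tm s * F 0%nat b tm s) <= Mb * Mb).
    { intros a b Ha Hb. apply abs_prod_le; [apply HBE | apply HBF]; lia || lra. }
    eapply Rle_trans. apply abs4.
    pose proof (H 3%nat 0%nat ltac:(lia) ltac:(lia)). pose proof (H 2%nat 1%nat ltac:(lia) ltac:(lia)).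
    pose proof (H 1%nat 2%nat ltac:(lia) ltac:(lia)). pose proof (H 0%nat 3%nat ltac:(lia) ltac:(lia)).
    lra. }
  change (x - h) with (x + - h) in X1. unfold Pt in X1.
  pose (sg G := lin3 G 0 (tm + ht) (tm - ht) tm 1 1 (-2)).
  pose (al G := lin3 G 0 (tm + ht) tm tm 1 (-1) 0).
  pose (be G := lin3 G 0 (tm - ht) tm tm 1 (-1) 0).
  pose (md G := lin3 G 0 tm tm tm 1 0 0).
  assert (Q2a := prod_lin3 E F (tm + ht) (tm - ht) tm 1 1 (-2) tm tm tm 1 0 0 x h _ _ _ _ HE HF Hh
     (fun y => lin3_sig E T J Mb tm ht HE HBE Hht H0 HT 0 y ltac:(lia))
     (fun y => lin3_sig E T J Mb tm ht HE HBE Hht H0 HT 1 y ltac:(lia))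
     (fun y => lin3_mid F T J Mb tm ht HBF Hht H0 HT 0 y ltac:(lia))
     (fun y => lin3_mid F T J Mb tm ht HBF Hht H0 HT 1 y ltac:(lia))).
  assert (Q2b := prod_lin3 F E (tm + ht) (tm - ht) tm 1 1 (-2) tm tm tm 1 0 0 x h _ _ _ _ HF HE Hh
     (fun y => lin3_sig F T J Mb tm ht HF HBF Hht H0 HT 0 y ltac:(lia))
     (fun y => lin3_sig F T J Mb tm ht HF HBF Hht H0 HT 1 y ltac:(lia))
     (fun y => lin3_mid E T J Mb tm ht HBE Hht H0 HT 0 y ltac:(lia))
     (fun y => lin3_mid E T J Mb tm ht HBE Hht H0 HT 1 y ltac:(lia))).
  assert (Q3a := prod_lin3 E F (tm + ht) tm tm 1 (-1) 0 (tm + ht) tm tm 1 (-1) 0 x h _ _ _ _ HE HF Hh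
     (fun y => lin3_alp E T J Mb tm ht HE HBE Hht H0 HT 0 y ltac:(lia))
     (fun y => lin3_alp E T J Mb tm ht HE HBE Hht H0 HT 1 y ltac:(lia))
     (fun y => lin3_alp F T J Mb tm ht HF HBF Hht H0 HT 0 y ltac:(lia))
     (fun y => lin3_alp F T J Mb tm ht HF HBF Hht H0 HT 1 y ltac:(lia))).
  assert (Q3b := prod_lin3 E F (tm + ht) tm tm 1 (-1) 0 (tm - ht) tm tm 1 (-1) 0 x h _ _ _ _ HE HF Hh
     (fun y => lin3_alp E T J Mb tm ht HE HBE Hht H0 HT 0 y ltac:(lia))
     (fun y => lin3_alp E T J Mb tm ht HE HBE Hht H0 HT 1 y ltac:(lia))
     (fun y => lin3_bet F T J Mb tm ht HF HBF Hht H0 HT 0 y ltac:(lia))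
     (fun y => lin3_bet F T J Mb tm ht HF HBF Hht H0 HT 1 y ltac:(lia))).
  assert (Q3c := prod_lin3 E F (tm - ht) tm tm 1 (-1) 0 (tm + ht) tm tm 1 (-1) 0 x h _ _ _ _ HE HF Hh
     (fun y => lin3_bet E T J Mb tm ht HE HBE Hht H0 HT 0 y ltac:(lia))
     (fun y => lin3_bet E T J Mb tm ht HE HBE Hht H0 HT 1 y ltac:(lia))
     (fun y => lin3_alp F T J Mb tm ht HF HBF Hht H0 HT 0 y ltac:(lia))
     (fun y => lin3_alp F T J Mb tm ht HF HBF Hht H0 HT 1 y ltac:(lia))).
  assert (Q3d := prod_lin3 E F (tm - ht) tm tm 1 (-1) 0 (tm - ht) tm tm 1 (-1) 0 x h _ _ _ _ HE HF Hh
     (fun y => lin3_bet E T J Mb tm ht HE HBE Hht H0 HT 0 y ltac:(lia))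
     (fun y => lin3_bet E T J Mb tm ht HE HBE Hht H0 HT 1 y ltac:(lia))
     (fun y => lin3_bet F T J Mb tm ht HF HBF Hht H0 HT 0 y ltac:(lia))
     (fun y => lin3_bet F T J Mb tm ht HF HBF Hht H0 HT 1 y ltac:(lia))).
  match type of X1 with Rabs ?q <= _ => set (q1 := q) in X1 end.
  match type of Q2a with Rabs ?q <= _ => set (q2a := q) in Q2a end.
  match type of Q2b with Rabs ?q <= _ => set (q2b := q) in Q2b end.
  match type of Q3a with Rabs ?q <= _ => set (q3a := q) in Q3a end.
  match type of Q3b with Rabs ?q <= _ => set (q3b := q) in Q3b end.
  match type of Q3c with Rabs ?q <= _ => set (q3c := q) in Q3c end.
  match type of Q3d with Rabs ?q <= _ => set (q3d := q) in Q3d end.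
  assert (Hid : Tnl E F tm ht h x = q1 / 2 + (q2a + q2b) / 4 + (q3a + (q3b + q3c) / 2 + q3d) / 6).
  { unfold q1, q2a, q2b, q3a, q3b, q3c, q3d, Tnl, Nt, V, lin3. field. lra. }
  rewrite Hid.
  assert (B1 : Mb * ht ^ 2 * Mb + Mb * (Mb * ht ^ 2) = 2 * (Mb * Mb * ht ^ 2)) by ring.
  assert (B2 : Mb * ht * (Mb * ht) + Mb * ht * (Mb * ht) = 2 * (Mb * Mb * ht ^ 2)) by ring.
  assert (B3 : 8 * (Mb * Mb) * h ^ 2 / 6 = 4 / 3 * (Mb * Mb * h ^ 2)) by field.
  rewrite B1 in Q2a, Q2b. rewrite B2 in Q3a, Q3b, Q3c, Q3d. rewrite B3 in X1.
  apply abs_le_inv in X1. apply abs_le_inv in Q2a. apply abs_le_inv in Q2b.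
  apply abs_le_inv in Q3a. apply abs_le_inv in Q3b. apply abs_le_inv in Q3c. apply abs_le_inv in Q3d.
  apply Rabs_le.
  replace (Mb * Mb * (h ^ 2 + 2 * ht ^ 2)) with (Mb * Mb * h ^ 2 + 2 * (Mb * Mb * ht ^ 2)) by ring.
  lra.
Qed.

Ltac Rring := match goal with |- ?a = ?b => change (@eq R a b) end; unfold Rdiv; ring.

Definition shiftF (E : nat -> nat -> R -> R -> R) d : nat -> nat -> R -> R -> R :=
  fun i j t y => E i j t (y + d).
Definition diffF (E : nat -> nat -> R -> R -> R) d : nat -> nat -> R -> R -> R :=
  fun i j t y => (E i j t (y + d) - E i j t y) / d.

Lemma isd_shift (f : R -> R) x d df : is_derive f (x + d) df ->
  is_derive (fun y => f (y + d)) x df.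
Proof.
  intros H.
  assert (H2 : is_derive (fun y : R => y + d) x 1).
  { auto_derive; [exact I| ring]. }
  pose proof (is_derive_comp f (fun y => y + d) x df 1 H H2) as H3.
  simpl in H3. unfold scal in H3; simpl in H3. unfold mult in H3; simpl in H3.
  replace df with (1 * df) by ring. exact H3.
Qed.

Lemma shiftF_tower E d : tower2 E -> tower2 (shiftF E d).
Proof.
  intros HE i j t x. unfold shiftF. split.
  - apply (proj1 (HE i j t (x + d))).
  - apply (isd_shift (fun y => E i j t y)). apply (proj2 (HE i j t (x + d))).
Qed.

Lemma diffF_tower E d : tower2 E -> tower2 (diffF E d).
Proof.
  intros HE i j t x. unfold diffF. split.
  - apply (is_derive_ext (fun s => / d * (E i j s (x + d) - E i j s x))).
    { intros s. Rring. }
    eapply isd_eq. apply isd_scal. apply isd_minus.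
    + apply (proj1 (HE i j t (x + d))).
    + apply (proj1 (HE i j t x)).
    + Rring.
  - apply (is_derive_ext (fun y => / d * (E i j t (y + d) - E i j t y))).
    { intros s. Rring. }
    eapply isd_eq. apply isd_scal. apply isd_minus.
    + apply (isd_shift (fun y => E i j t y)). apply (proj2 (HE i j t (x + d))).
    + apply (proj2 (HE i j t x)).
    + Rring.
Qed.

Lemma shiftF_bnd E d T J Mb : bnd E T J Mb -> bnd (shiftF E d) T J Mb.
Proof. intros HB i j t x Hi Hj Ht. unfold shiftF. apply HB; auto. Qed.

Lemma diffF_bnd E d T J Mb : tower2 E -> 0 < d -> bnd E T (S J) Mb -> bnd (diffF E d) T J Mb.
Proof.
  intros HE Hd HB i j t x Hi Hj Ht. unfold diffF.
  apply abs_div_bound; [lra|].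
  replace d with (x + d - x) at 2 by ring.
  apply (mvt_bound (xt E i j t) x (x + d) Mb (tower_xt _ _ _ _ _ HE) ltac:(lra)).
  intros s _. unfold xt. simpl. apply HB; auto. lia.
Qed.

Lemma V_shift E d i j t x c : V (shiftF E d) i j t x c = V E i j t (x + d) c.
Proof. unfold V, shiftF. f_equal. ring. Qed.

Lemma Tlin_shift E d tm ht h beta x :
  Tlin E tm ht h beta (x + d) = Tlin (shiftF E d) tm ht h beta x.
Proof. unfold Tlin, d3v. rewrite !V_shift. reflexivity. Qed.

Lemma Tnl_shift E d tm ht h x :
  Tnl E E tm ht h (x + d) = Tnl (shiftF E d) (shiftF E d) tm ht h x.
Proof. unfold Tnl, Nt. rewrite !V_shift. reflexivity. Qed.

Lemma Tlin_lin E d tm ht h beta x : d <> 0 -> h <> 0 -> ht <> 0 ->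
  Tlin (shiftF E d) tm ht h beta x - Tlin E tm ht h beta x = d * Tlin (diffF E d) tm ht h beta x.
Proof. intros. unfold Tlin, d3v, V, shiftF, diffF. field. auto. Qed.

Lemma Tnl_lin E d tm ht h x : d <> 0 -> h <> 0 ->
  Tnl (shiftF E d) (shiftF E d) tm ht h x - Tnl E E tm ht h x
  = d * (Tnl (diffF E d) (shiftF E d) tm ht h x + Tnl E (diffF E d) tm ht h x).
Proof. intros. unfold Tnl, Nt, V, shiftF, diffF. field. auto. Qed.

Lemma cont_delta (F : R * R -> R) t x : continuous F (t, x) ->
  exists d, 0 < d /\ forall s y, Rabs (s - t) < d -> Rabs (y - x) < d -> Rabs (F (s, y) - F (t, x)) < 1.
Proof.
  intros HC.
  destruct (proj1 (filterlim_locally F (F (t, x))) HC (mkposreal 1 Rlt_0_1)) as [eps Heps].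
  exists eps. split; [apply cond_pos|]. intros s y H1 H2.
  apply (Heps (s, y)). split; simpl; assumption.
Qed.

Lemma fold_max_in {A} (g : A -> R) l t : In t l -> g t <= fold_right Rmax 0 (map g l).
Proof.
  induction l as [|a l IH]; simpl; [tauto|].
  intros [->|H]. - apply Rmax_l. - eapply Rle_trans. apply IH; auto. apply Rmax_r.
Qed.

Lemma box_bound (F : R * R -> R) a b c d : (forall p, continuous F p) ->
  exists B, forall t x, a <= t <= b -> c <= x <= d -> Rabs (F (t, x)) <= B.
Proof.
  intros HC.
  assert (Hd : forall p : Compactness.Tn 2 R, exists r : posreal,
     forall s y, Rabs (s - fst p) < r -> Rabs (y - fst (snd p)) < r ->
        Rabs (F (s, y) - F (fst p, fst (snd p))) < 1).
  { intros [t [x []]]. simpl. destruct (cont_delta F t x (HC _)) as [r [Hr H]].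
    exists (mkposreal r Hr). exact H. }
  destruct (choice _ Hd) as [delta Hdelta].
  apply NNPP. intros Hn.
  apply (compactness_list 2 (a, (c, Datatypes.tt)) (b, (d, Datatypes.tt)) delta). intros [l Hl].
  apply Hn.
  exists (fold_right Rmax 0 (map (fun p : Compactness.Tn 2 R => Rabs (F (fst p, fst (snd p))) + 1) l)).
  set (B := fold_right Rmax 0 _).
  intros t x Ht Hx.
  destruct (Hl (t, (x, Datatypes.tt))) as [p [Hin [_ Hcl]]].
  { simpl. tauto. }
  destruct p as [t1 [x1 []]]. simpl in Hcl. destruct Hcl as [H1 [H2 _]].
  pose proof (Hdelta (t1, (x1, Datatypes.tt)) t x H1 H2) as Hb. simpl in Hb.
  pose proof (fold_max_in (fun p : Compactness.Tn 2 R => Rabs (F (fst p, fst (snd p))) + 1) l _ Hin) as Hm.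
  change (Rabs (F (t1, x1)) + 1 <= B) in Hm.
  pose proof (Rabs_triang_inv (F (t, x)) (F (t1, x1))). lra.
Qed.

Section Per.
Variables (D : nat -> nat -> R -> R -> R) (L : R).
Hypotheses (HD : tower2 D) (HP0 : forall t x, D 0%nat 0%nat t (x + L) = D 0%nat 0%nat t x).

Lemma D_per i j t x : D i j t (x + L) = D i j t x.
Proof.
  revert j t x. induction i as [|i IHi].
  - intros j. induction j as [|j IHj]; intros t x; [apply HP0|].
    assert (H1 := proj2 (HD 0%nat j t x)).
    assert (H2 := isd_shift (fun y => D 0%nat j t y) x L _ (proj2 (HD 0%nat j t (x + L)))).
    assert (H3 : is_derive (fun y => D 0%nat j t y) x (D 0%nat (S j) t (x + L))).
    { apply (is_derive_ext (fun y => D 0%nat j t (y + L))); auto. }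
    apply is_derive_unique in H1. apply is_derive_unique in H3. congruence.
  - intros j t x.
    assert (H1 := proj1 (HD i j t x)).
    assert (H3 : is_derive (fun s => D i j s x) t (D (S i) j t (x + L))).
    { apply (is_derive_ext (fun s => D i j s (x + L))); auto. apply (proj1 (HD i j t (x + L))). }
    apply is_derive_unique in H1. apply is_derive_unique in H3. congruence.
Qed.

Lemma D_per_nat i j t x m : D i j t (x + INR m * L) = D i j t x.
Proof.
  induction m as [|m IH].
  - simpl. f_equal. ring.
  - rewrite S_INR. replace (x + (INR m + 1) * L) with ((x + INR m * L) + L) by ring.
    rewrite D_per. apply IH.
Qed.

Lemma D_perZ i j t x n : D i j t (x + IZR n * L) = D i j t x.
Proof.
  destruct (Z_le_gt_dec 0 n) as [H|H].
  - rewrite <- (Z2Nat.id n H). rewrite <- INR_IZR_INZ. apply D_per_nat.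
  - replace n with (- Z.of_nat (Z.to_nat (- n)))%Z by lia.
    rewrite opp_IZR, <- INR_IZR_INZ.
    rewrite <- (D_per_nat i j t (x + - INR (Z.to_nat (- n)) * L) (Z.to_nat (- n))).
    f_equal. ring.
Qed.

Lemma D_reduce i j t x : 0 < L -> exists x0, 0 <= x0 <= L /\ D i j t x = D i j t x0.
Proof.
  intros HL. destruct (archimed (x / L)) as [H1 H2].
  set (n := (up (x / L) - 1)%Z).
  exists (x + IZR (- n) * L). split.
  - unfold n. rewrite opp_IZR, minus_IZR.
    assert (x = (x / L) * L) by (field; lra).
    split; nra.
  - rewrite D_perZ. reflexivity.
Qed.
End Per.

Lemma bnd_finite (P : nat -> nat -> R -> Prop) :
  (forall i j B B', B <= B' -> P i j B -> P i j B') ->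
  (forall i j, exists B, P i j B) ->
  forall n m, exists B, 0 <= B /\ forall i j, (i <= n)%nat -> (j <= m)%nat -> P i j B.
Proof.
  intros Hmono Hex n m.
  induction n as [|n IHn].
  - induction m as [|m IHm].
    + destruct (Hex 0%nat 0%nat) as [B HB]. exists (Rmax 0 B). split; [apply Rmax_l|].
      intros i j Hi Hj. replace i with 0%nat by lia. replace j with 0%nat by lia.
      apply Hmono with B; auto. apply Rmax_r.
    + destruct IHm as [B [HB0 HB]]. destruct (Hex 0%nat (S m)) as [B1 HB1].
      exists (Rmax B B1). split. { eapply Rle_trans; [exact HB0| apply Rmax_l]. }
      intros i j Hi Hj. destruct (Nat.eq_dec j (S m)) as [->|Hne].
      * replace i with 0%nat by lia. apply Hmono with B1; auto. apply Rmax_r.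
      * apply Hmono with B; [apply Rmax_l| apply HB; lia].
  - destruct IHn as [B [HB0 HB]].
    assert (Hrow : exists B1, 0 <= B1 /\ forall j, (j <= m)%nat -> P (S n) j B1).
    { clear HB. induction m as [|m IHm].
      - destruct (Hex (S n) 0%nat) as [B1 HB1]. exists (Rmax 0 B1). split; [apply Rmax_l|].
        intros j Hj. replace j with 0%nat by lia. apply Hmono with B1; auto. apply Rmax_r.
      - destruct IHm as [B1 [HB10 HB1]]. destruct (Hex (S n) (S m)) as [B2 HB2].
        exists (Rmax B1 B2). split. { eapply Rle_trans; [exact HB10| apply Rmax_l]. }
        intros j Hj. destruct (Nat.eq_dec j (S m)) as [->|Hne].
        + apply Hmono with B2; auto. apply Rmax_r.
        + apply Hmono with B1; [apply Rmax_l| apply HB1; lia]. }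
    destruct Hrow as [B1 [HB10 HB1]].
    exists (Rmax B B1). split. { eapply Rle_trans; [exact HB0| apply Rmax_l]. }
    intros i j Hi Hj. destruct (Nat.eq_dec i (S n)) as [->|Hne].
    + apply Hmono with B1; [apply Rmax_r| apply HB1; lia].
    + apply Hmono with B; [apply Rmax_l| apply HB; lia].
Qed.

Lemma D_global_bnd (D : nat -> nat -> R -> R -> R) L T :
  0 < L -> tower2 D -> (forall t x, D 0%nat 0%nat t (x + L) = D 0%nat 0%nat t x) ->
  (forall i j p, continuous (fun p : R * R => D i j (fst p) (snd p)) p) ->
  exists Mb, 0 <= Mb /\ bnd D T 6 Mb.
Proof.
  intros HL HD HP HC.
  destruct (bnd_finite (fun i j B => forall t x, 0 <= t <= T -> Rabs (D i j t x) <= B)) with (n := 3%nat) (m := 6%nat)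
    as [B [HB0 HB]].
  - intros i j B B' HBB H t x Ht. eapply Rle_trans; [apply H; auto| auto].
  - intros i j. destruct (box_bound (fun p : R * R => D i j (fst p) (snd p)) 0 T 0 L (HC i j)) as [B HB].
    exists B. intros t x Ht. destruct (D_reduce D L HD HP i j t x HL) as [x0 [Hx0 ->]].
    apply (HB t x0); auto.
  - exists B. split; auto. intros i j t x Hi Hj Ht. apply HB; auto.
Qed.

Definition SK (K : nat) (f : Z -> R) : R := sum_f_R0 (fun i => f (Z.of_nat (S i))) (K - 1).
Definition per (K : nat) (f : Z -> R) : Prop := forall k, f (k + Z.of_nat K)%Z = f k.

Lemma SK_ext K f g : (forall k, f k = g k) -> SK K f = SK K g.
Proof. intros H. unfold SK. apply sum_eq. intros; apply H. Qed.

Lemma SK_plus K f g : SK K (fun k => f k + g k) = SK K f + SK K g.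
Proof. unfold SK. apply plus_sum. Qed.

Lemma SK_scal K c f : SK K (fun k => c * f k) = c * SK K f.
Proof. unfold SK. induction (K - 1)%nat as [|n IHn]; [simpl; ring| rewrite !tech5, IHn; ring]. Qed.

Lemma SK_minus K f g : SK K (fun k => f k - g k) = SK K f - SK K g.
Proof.
  rewrite (SK_ext K _ (fun k => f k + (-1) * g k)) by (intros; ring).
  rewrite SK_plus, SK_scal. ring.
Qed.

Lemma SK_le K f g : (forall k, f k <= g k) -> SK K f <= SK K g.
Proof. intros H. unfold SK. apply sum_Rle. intros; apply H. Qed.

Lemma SK_nonneg K f : (forall k, 0 <= f k) -> 0 <= SK K f.
Proof.
  intros H. replace 0 with (SK K (fun _ => 0)).
  - apply SK_le; auto.
  - unfold SK. clear H. induction (K - 1)%nat as [|n IHn]; [simpl; ring| rewrite !tech5, IHn; ring].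
Qed.

Lemma SK_abs K f g : (forall k, Rabs (f k) <= g k) -> Rabs (SK K f) <= SK K g.
Proof.
  intros H. apply Rabs_le. split.
  - replace (- SK K g) with (SK K (fun k => - g k)).
    + apply SK_le. intros k. specialize (H k). pose proof (Rle_abs (- f k)). rewrite Rabs_Ropp in H0. lra.
    + rewrite (SK_ext K _ (fun k => (-1) * g k)) by (intros; ring). rewrite SK_scal. ring.
  - apply SK_le. intros k. specialize (H k). pose proof (Rle_abs (f k)). lra.
Qed.

Lemma SK_tele K G : (1 <= K)%nat -> per K G -> SK K (fun k => G (k + 1)%Z - G k) = 0.
Proof.
  intros HK HP. unfold SK.
  assert (Hgen : forall n, sum_f_R0 (fun i => G (Z.of_nat (S i) + 1)%Z - G (Z.of_nat (S i))) n
                   = G (Z.of_nat (S n) + 1)%Z - G 1%Z).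
  { induction n as [|n IH].
    - simpl. reflexivity.
    - rewrite tech5, IH. replace (Z.of_nat (S (S n))) with (Z.of_nat (S n) + 1)%Z by lia. ring. }
  rewrite Hgen. replace (Z.of_nat (S (K - 1)) + 1)%Z with (1 + Z.of_nat K)%Z by lia.
  rewrite HP. ring.
Qed.

Lemma SK_shift K f : (1 <= K)%nat -> per K f -> SK K (fun k => f (k + 1)%Z) = SK K f.
Proof.
  intros HK HP. apply Rminus_diag_uniq. rewrite <- SK_minus. apply SK_tele; auto.
Qed.

Lemma SK_shiftm K f : (1 <= K)%nat -> per K f -> SK K (fun k => f (k - 1)%Z) = SK K f.
Proof.
  intros HK HP. rewrite <- (SK_shift K (fun k => f (k - 1)%Z)); auto.
  - apply SK_ext. intros k. f_equal. lia.
  - intros k. replace (k + Z.of_nat K - 1)%Z with (k - 1 + Z.of_nat K)%Z by lia. apply HP.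
Qed.

Lemma SK_const K c : (1 <= K)%nat -> SK K (fun _ => c) = INR K * c.
Proof.
  intros HK. unfold SK. destruct K as [|K]; [lia|].
  replace (S K - 1)%nat with K by lia. clear HK. induction K as [|K IH].
  - simpl. ring.
  - rewrite tech5, IH. rewrite (S_INR (S K)). ring.
Qed.

Lemma per_m1 K v : per K v -> forall k, v (k + Z.of_nat K - 1)%Z = v (k - 1)%Z.
Proof. intros HP k. replace (k + Z.of_nat K - 1)%Z with (k - 1 + Z.of_nat K)%Z by lia. apply HP. Qed.
Lemma per_p1 K v : per K v -> forall k, v (k + Z.of_nat K + 1)%Z = v (k + 1)%Z.
Proof. intros HP k. replace (k + Z.of_nat K + 1)%Z with (k + 1 + Z.of_nat K)%Z by lia. apply HP. Qed.

Lemma Zp1m1 k : (k + 1 - 1)%Z = k. Proof. lia. Qed.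

Lemma SK_tele_c K G c : (1 <= K)%nat -> per K G -> SK K (fun k => c * (G (k + 1)%Z - G k)) = 0.
Proof. intros. rewrite SK_scal, SK_tele; auto. ring. Qed.

Section SBP.
Variables (K : nat) (dx : R).
Hypotheses (HK : (1 <= K)%nat) (Hdx : 0 < dx).

Lemma sk_skew v : per K v -> SK K (fun k => d1_x dx v k * v k) = 0.
Proof.
  intros HP. rewrite <- (SK_tele_c K (fun k => v k * v (k - 1)%Z) (/ (2 * dx))); auto.
  - apply SK_ext. intros k. unfold d1_x. rewrite Zp1m1. field. lra.
  - intros k. simpl. rewrite HP, per_m1; auto.
Qed.

Lemma sk_adj a b : per K a -> per K b ->
  SK K (fun k => d1_x dx a k * b k) = - SK K (fun k => a k * d1_x dx b k).
Proof.
  intros Ha Hb. enough (SK K (fun k => d1_x dx a k * b k) + SK K (fun k => a k * d1_x dx b k) = 0) by lra.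
  rewrite <- SK_plus.
  rewrite (SK_ext K _ (fun k => / (2 * dx) * ((a (k + 1)%Z * b (k + 1 - 1)%Z - a k * b (k - 1)%Z)
       + (a (k + 1 - 1)%Z * b (k + 1)%Z - a (k - 1)%Z * b k)))).
  2:{ intros k. unfold d1_x. rewrite !Zp1m1. field. lra. }
  rewrite SK_scal, SK_plus.
  rewrite (SK_tele K (fun k => a k * b (k - 1)%Z)); auto.
  2:{ intros k. rewrite Ha, per_m1; auto. }
  rewrite (SK_tele K (fun k => a (k - 1)%Z * b k)); auto.
  2:{ intros k. rewrite Hb, per_m1; auto. }
  ring.
Qed.

Lemma sk_sbp p q : per K p -> per K q ->
  SK K (fun k => p k * d2_x dx q k) = - SK K (fun k => dplus_x dx p k * dplus_x dx q k).
Proof.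
  intros Hp Hq. enough (SK K (fun k => p k * d2_x dx q k) + SK K (fun k => dplus_x dx p k * dplus_x dx q k) = 0) by lra.
  rewrite <- SK_plus.
  rewrite (SK_ext K _ (fun k => / (dx ^ 2) * ((p (k + 1)%Z * q (k + 1)%Z - p k * q k)
       - (p (k + 1)%Z * q (k + 1 - 1)%Z - p k * q (k - 1)%Z)))).
  2:{ intros k. unfold d2_x, dplus_x. rewrite !Zp1m1. field. lra. }
  rewrite SK_scal, SK_minus.
  rewrite (SK_tele K (fun k => p k * q k)); auto.
  2:{ intros k. rewrite Hp, Hq; auto. }
  rewrite (SK_tele K (fun k => p k * q (k - 1)%Z)); auto.
  2:{ intros k. rewrite Hp, per_m1; auto. }
  ring.
Qed.

Lemma sk_d1d2 w : per K w -> SK K (fun k => d1_x dx w k * d2_x dx w k) = 0.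
Proof.
  intros Hw. rewrite <- (SK_tele_c K (fun k => (w k - w (k - 1)%Z) ^ 2) (/ (2 * dx ^ 3))); auto.
  - apply SK_ext. intros k. unfold d1_x, d2_x. rewrite Zp1m1. field. lra.
  - intros k. simpl. rewrite Hw, per_m1; auto.
Qed.
End SBP.

Definition Nf (u1 u0 : Z -> R) : Z -> R := fun j => u1 j ^ 2 + u1 j * u0 j + u0 j ^ 2.
Definition Mf (u1 u0 : Z -> R) : Z -> R := fun j => (u1 j + u0 j) / 2.
Definition resid alpha beta dx dt (u1 u0 : Z -> R) : Z -> R := fun k =>
  (u1 k - u0 k) / dt + alpha / 6 * d1_x dx (Nf u1 u0) k - beta * d1_x dx (d2_x dx (Mf u1 u0)) k.
Definition phi (c z : R) := 3 * c * z ^ 2 + z ^ 3.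
Definition En K dx alpha beta sg Kc (e ut : Z -> R) :=
  sg * (beta / 2) * SK K (fun k => dplus_x dx e k ^ 2) + sg * (alpha / 6) * SK K (fun k => phi (ut k) (e k))
  + Kc * SK K (fun k => e k ^ 2).

Lemma per_add K f g : per K f -> per K g -> per K (fun k => f k + g k).
Proof. intros Hf Hg k. rewrite Hf, Hg. auto. Qed.
Lemma per_sub K f g : per K f -> per K g -> per K (fun k => f k - g k).
Proof. intros Hf Hg k. rewrite Hf, Hg. auto. Qed.
Lemma per_mul K f g : per K f -> per K g -> per K (fun k => f k * g k).
Proof. intros Hf Hg k. rewrite Hf, Hg. auto. Qed.
Lemma per_scal K c f : per K f -> per K (fun k => c * f k).
Proof. intros Hf k. rewrite Hf. auto. Qed.
Lemma per_d1 K dx f : per K f -> per K (d1_x dx f).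
Proof. intros Hf k. unfold d1_x. rewrite per_p1, per_m1; auto. Qed.
Lemma per_d2 K dx f : per K f -> per K (d2_x dx f).
Proof. intros Hf k. unfold d2_x. rewrite per_p1, per_m1, Hf; auto. Qed.
Lemma per_dp K dx f : per K f -> per K (dplus_x dx f).
Proof. intros Hf k. unfold dplus_x. rewrite per_p1, Hf; auto. Qed.
Lemma per_Nf K a b : per K a -> per K b -> per K (Nf a b).
Proof. intros Ha Hb k. unfold Nf. rewrite Ha, Hb. auto. Qed.
Lemma per_Mf K a b : per K a -> per K b -> per K (Mf a b).
Proof. intros Ha Hb k. unfold Mf. rewrite Ha, Hb. auto. Qed.

Lemma term_bound c S B : Rabs S <= B -> c * S <= Rabs c * B.
Proof.
  intros H. eapply Rle_trans. apply Rle_abs. rewrite Rabs_mult.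
  apply Rmult_le_compat_l; auto. apply Rabs_pos.
Qed.

Lemma sq_nonneg x : 0 <= x ^ 2. Proof. nra. Qed.

Section Step.
Variables (K : nat) (dx dt alpha beta r R0 M1 sg Kc : R) (a b at' bt : Z -> R).
Hypotheses (HK : (1 <= K)%nat) (Hdx : 0 < dx) (Hdt : 0 < dt) (Hsg : sg = 1 \/ sg = -1) (HKc : 0 <= Kc)
  (Hpa : per K a) (Hpb : per K b) (Hpat : per K at') (Hpbt : per K bt)
  (Hs : scheme_step alpha beta dx dt b a)
  (Ha : forall k, Rabs (a k) <= R0) (Hb : forall k, Rabs (b k) <= R0)
  (Hat : forall k, Rabs (at' k) <= r) (Hbt : forall k, Rabs (bt k) <= r)
  (Hab : forall k, Rabs (at' k - bt k) <= dt * M1).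

Let x := fun k => a k - at' k.
Let y := fun k => b k - bt k.
Let tau := resid alpha beta dx dt at' bt.
Let w := Mf x y.
Let G := fun k => Nf a b k - Nf at' bt k.
Let v := fun k => alpha / 6 * G k - beta * d2_x dx w k.

Lemma px : per K x. Proof. apply per_sub; auto. Qed.
Lemma py : per K y. Proof. apply per_sub; auto. Qed.
Lemma pw : per K w. Proof. apply per_Mf; [apply px | apply py]. Qed.
Lemma pG : per K G. Proof. apply per_sub; apply per_Nf; auto. Qed.
Lemma pv : per K v. Proof. apply per_sub. apply per_scal, pG. apply per_scal, per_d2, pw. Qed.
Lemma ptau : per K tau.
Proof.
  pose proof (per_d1 K dx _ (per_Nf K at' bt Hpat Hpbt)) as P1.
  pose proof (per_d1 K dx _ (per_d2 K dx _ (per_Mf K at' bt Hpat Hpbt))) as P2.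
  intros k. unfold tau, resid. rewrite P1, P2, Hpat, Hpbt. reflexivity.
Qed.

Lemma EE k : x k - y k = dt * (- d1_x dx v k - tau k).
Proof.
  pose proof (Hs k) as H.
  assert (H' : a k - b k = dt * (- (alpha / 6) * d1_x dx (fun j => a j ^ 2 + a j * b j + b j ^ 2) k
      + beta * d1_x dx (d2_x dx (fun j => (a j + b j) / 2)) k)).
  { rewrite <- H. field. lra. }
  replace (x k - y k) with ((a k - b k) - (at' k - bt k)) by (unfold x, y; ring).
  rewrite H'. unfold v, tau, resid, G, w, Nf, Mf, x, y, d1_x, d2_x. field. lra.
Qed.

Let A  := SK K (fun k => y k ^ 2).
Let A' := SK K (fun k => x k ^ 2).
Let B  := SK K (fun k => dplus_x dx y k ^ 2).
Let B' := SK K (fun k => dplus_x dx x k ^ 2).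
Let Ph  := SK K (fun k => phi (bt k) (y k)).
Let Ph' := SK K (fun k => phi (at' k) (x k)).
Let S1 := SK K (fun k => (at' k - bt k) * (x k ^ 2 + x k * y k + y k ^ 2)).
Let S2 := SK K (fun k => tau k * G k).
Let S3 := SK K (fun k => dplus_x dx tau k * dplus_x dx w k).
Let S4 := SK K (fun k => G k * d1_x dx w k).
Let S5 := SK K (fun k => tau k * w k).

Lemma I1 : alpha / 6 * (Ph' - Ph - S1) + beta * ((B' - B) / 2) = - dt * (alpha / 6 * S2 + beta * S3).
Proof.
  assert (H1 : SK K (fun k => (x k - y k) * v k) = - dt * SK K (fun k => tau k * v k)).
  { rewrite (SK_ext K _ (fun k => dt * (- (d1_x dx v k * v k)) + (- dt) * (tau k * v k))).
    2:{ intros k. rewrite EE. ring. }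
    rewrite SK_plus, !SK_scal.
    rewrite (SK_ext K (fun k => - (d1_x dx v k * v k)) (fun k => (-1) * (d1_x dx v k * v k))) by (intros; ring).
    rewrite SK_scal, (sk_skew K dx HK Hdx v pv). ring. }
  assert (H2 : SK K (fun k => (x k - y k) * v k) =
     alpha / 6 * SK K (fun k => (x k - y k) * G k) - beta * SK K (fun k => (x k - y k) * d2_x dx w k)).
  { rewrite <- !SK_scal, <- SK_minus. apply SK_ext. intros k. unfold v. ring. }
  assert (H3 : SK K (fun k => (x k - y k) * d2_x dx w k) = - ((B' - B) / 2)).
  { rewrite (sk_sbp K dx HK Hdx (fun k => x k - y k) w (per_sub K x y px py) pw).
    f_equal. unfold B', B. rewrite <- SK_minus.
    rewrite (SK_ext K (fun k => dplus_x dx x k ^ 2 - dplus_x dx y k ^ 2)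
       (fun k => 2 * (dplus_x dx (fun k0 => x k0 - y k0) k * dplus_x dx w k))).
    - rewrite SK_scal. field.
    - intros k. unfold dplus_x, w, Mf. field. lra. }
  assert (H4 : SK K (fun k => (x k - y k) * G k) = Ph' - Ph - S1).
  { unfold Ph', Ph, S1. rewrite <- !SK_minus. apply SK_ext. intros k.
    unfold G, Nf, phi, x, y. ring. }
  assert (H5 : SK K (fun k => tau k * v k) = alpha / 6 * S2 + beta * S3).
  { unfold S2, S3. rewrite (SK_ext K _ (fun k => alpha / 6 * (tau k * G k) + (- beta) * (tau k * d2_x dx w k))).
    2:{ intros k. unfold v. ring. }
    rewrite SK_plus, !SK_scal. rewrite (sk_sbp K dx HK Hdx tau w ptau pw). ring. }
  rewrite <- H4, <- H5. rewrite H3 in H2. lra.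
Qed.

Lemma I2 : (A' - A) / 2 = dt * (alpha / 6 * S4) - dt * S5.
Proof.
  assert (H1 : SK K (fun k => (x k - y k) * w k) = - dt * SK K (fun k => d1_x dx v k * w k) - dt * S5).
  { unfold S5. rewrite (SK_ext K _ (fun k => (- dt) * (d1_x dx v k * w k) + (- dt) * (tau k * w k))).
    2:{ intros k. rewrite EE. ring. }
    rewrite SK_plus, !SK_scal. ring. }
  assert (H2 : SK K (fun k => d1_x dx v k * w k) = - (alpha / 6 * S4)).
  { rewrite (sk_adj K dx HK Hdx v w pv pw). f_equal. unfold S4.
    rewrite (SK_ext K _ (fun k => alpha / 6 * (G k * d1_x dx w k) + (- beta) * (d1_x dx w k * d2_x dx w k))).
    2:{ intros k. unfold v. ring. }
    rewrite SK_plus, !SK_scal, (sk_d1d2 K dx HK Hdx w pw). ring. }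
  assert (H3 : SK K (fun k => (x k - y k) * w k) = (A' - A) / 2).
  { unfold A', A. rewrite <- SK_minus.
    rewrite (SK_ext K (fun k => x k ^ 2 - y k ^ 2) (fun k => 2 * ((x k - y k) * w k))).
    - rewrite SK_scal. field.
    - intros k. unfold w, Mf. field. }
  rewrite <- H3, H1, H2. ring.
Qed.

Lemma pw1 (c m x0 y0 : R) : Rabs c <= m -> Rabs (c * (x0 ^ 2 + x0 * y0 + y0 ^ 2)) <= m * (3 / 2) * (x0 ^ 2 + y0 ^ 2).
Proof.
  intros H.
  assert (E1 : x0 ^ 2 + x0 * y0 + y0 ^ 2 = (x0 + y0 / 2) ^ 2 + 3 / 4 * y0 ^ 2) by field.
  assert (E2 : (3 / 2) * (x0 ^ 2 + y0 ^ 2) - (x0 ^ 2 + x0 * y0 + y0 ^ 2) = (x0 - y0) ^ 2 / 2) by field.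
  pose proof (sq_nonneg (x0 + y0 / 2)). pose proof (sq_nonneg y0). pose proof (sq_nonneg (x0 - y0)).
  assert (0 <= x0 ^ 2 + x0 * y0 + y0 ^ 2) by lra.
  assert (x0 ^ 2 + x0 * y0 + y0 ^ 2 <= (3 / 2) * (x0 ^ 2 + y0 ^ 2)) by lra.
  rewrite Rabs_mult. rewrite (Rabs_pos_eq (x0 ^ 2 + x0 * y0 + y0 ^ 2)) by lra.
  assert (0 <= Rabs c) by apply Rabs_pos.
  apply Rle_trans with (m * (x0 ^ 2 + x0 * y0 + y0 ^ 2)).
  - apply Rmult_le_compat_r; auto.
  - rewrite Rmult_assoc. apply Rmult_le_compat_l; lra.
Qed.

Lemma pw2 (t g cG x0 y0 : R) : 0 <= cG -> Rabs g <= cG * (Rabs x0 + Rabs y0) ->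
  Rabs (t * g) <= cG * (t ^ 2 + (x0 ^ 2 + y0 ^ 2) / 2).
Proof.
  intros Hc H. rewrite Rabs_mult.
  apply Rle_trans with (Rabs t * (cG * (Rabs x0 + Rabs y0))).
  - apply Rmult_le_compat_l; auto. apply Rabs_pos.
  - pose proof (Rabs_pos t). pose proof (Rabs_pos x0). pose proof (Rabs_pos y0).
    assert (Rabs t * (Rabs x0 + Rabs y0) <= t ^ 2 + (x0 ^ 2 + y0 ^ 2) / 2).
    { rewrite <- (pow2_abs t), <- (pow2_abs x0), <- (pow2_abs y0).
      pose proof (sq_nonneg (Rabs t - Rabs x0)). pose proof (sq_nonneg (Rabs t - Rabs y0)). nra. }
    nra.
Qed.

Lemma pw3 (p q1 q2 : R) : Rabs (p * ((q1 + q2) / 2)) <= p ^ 2 / 2 + (q1 ^ 2 + q2 ^ 2) / 4.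
Proof.
  pose proof (sq_nonneg (p - (q1 + q2) / 2)). pose proof (sq_nonneg (p + (q1 + q2) / 2)).
  pose proof (sq_nonneg (q1 - q2)).
  apply Rabs_le. split; nra.
Qed.

Lemma pw4 (g cG x0 y0 p1 p2 : R) : 0 <= cG -> Rabs g <= cG * (Rabs x0 + Rabs y0) ->
  Rabs (g * ((p1 + p2) / 2)) <= cG / 2 * (x0 ^ 2 + y0 ^ 2 + p1 ^ 2 + p2 ^ 2).
Proof.
  intros Hc H. rewrite Rabs_mult.
  assert (Hq : Rabs ((p1 + p2) / 2) <= (Rabs p1 + Rabs p2) / 2).
  { unfold Rdiv. rewrite Rabs_mult, (Rabs_pos_eq (/ 2)) by lra.
    apply Rmult_le_compat_r; [lra| apply Rabs_triang]. }
  apply Rle_trans with (cG * (Rabs x0 + Rabs y0) * ((Rabs p1 + Rabs p2) / 2)).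
  - apply Rmult_le_compat; auto; apply Rabs_pos.
  - pose proof (Rabs_pos p1). pose proof (Rabs_pos p2). pose proof (Rabs_pos x0). pose proof (Rabs_pos y0).
    assert ((Rabs x0 + Rabs y0) * (Rabs p1 + Rabs p2) <= x0 ^ 2 + y0 ^ 2 + p1 ^ 2 + p2 ^ 2).
    { rewrite <- (pow2_abs p1), <- (pow2_abs x0), <- (pow2_abs y0), <- (pow2_abs p2).
      pose proof (sq_nonneg (Rabs x0 - Rabs p1)). pose proof (sq_nonneg (Rabs x0 - Rabs p2)).
      pose proof (sq_nonneg (Rabs y0 - Rabs p1)). pose proof (sq_nonneg (Rabs y0 - Rabs p2)). nra. }
    nra.
Qed.

Lemma r_nonneg : 0 <= r. Proof. pose proof (Hat 0%Z). pose proof (Rabs_pos (at' 0%Z)). lra. Qed.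
Lemma R0_nonneg : 0 <= R0. Proof. pose proof (Ha 0%Z). pose proof (Rabs_pos (a 0%Z)). lra. Qed.

Let cG := 2 * R0 + 2 * r.

Lemma Gbound k : Rabs (G k) <= cG * (Rabs (x k) + Rabs (y k)).
Proof.
  pose proof r_nonneg. pose proof R0_nonneg.
  replace (G k) with ((a k + at' k + bt k) * x k + (b k + bt k + a k) * y k)
    by (unfold G, Nf, x, y; ring).
  eapply Rle_trans. apply Rabs_triang. rewrite !Rabs_mult.
  assert (Rabs (a k + at' k + bt k) <= cG).
  { eapply Rle_trans. apply Rabs_triang. eapply Rle_trans. apply Rplus_le_compat_r. apply Rabs_triang.
    pose proof (Ha k). pose proof (Hat k). pose proof (Hbt k). unfold cG. lra. }
  assert (Rabs (b k + bt k + a k) <= cG).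
  { eapply Rle_trans. apply Rabs_triang. eapply Rle_trans. apply Rplus_le_compat_r. apply Rabs_triang.
    pose proof (Hb k). pose proof (Ha k). pose proof (Hbt k). unfold cG. lra. }
  pose proof (Rabs_pos (x k)). pose proof (Rabs_pos (y k)).
  assert (Rabs (a k + at' k + bt k) * Rabs (x k) <= cG * Rabs (x k)) by (apply Rmult_le_compat_r; auto).
  assert (Rabs (b k + bt k + a k) * Rabs (y k) <= cG * Rabs (y k)) by (apply Rmult_le_compat_r; auto).
  lra.
Qed.

Let T1 := SK K (fun k => tau k ^ 2).
Let T2 := SK K (fun k => dplus_x dx tau k ^ 2).

Lemma cG_nonneg : 0 <= cG. Proof. pose proof r_nonneg. pose proof R0_nonneg. unfold cG. lra. Qed.

Lemma BS1 : Rabs S1 <= dt * M1 * (3 / 2) * (A' + A).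
Proof.
  unfold S1, A', A. rewrite <- SK_plus, <- SK_scal. apply SK_abs. intros k.
  replace (dt * M1 * (3 / 2) * (x k ^ 2 + y k ^ 2)) with (dt * M1 * (3 / 2) * (x k ^ 2 + y k ^ 2)) by ring.
  apply pw1. apply Hab.
Qed.

Lemma BS2 : Rabs S2 <= cG * (T1 + (A' + A) / 2).
Proof.
  unfold S2, T1, A', A.
  replace (cG * (SK K (fun k => tau k ^ 2) + (SK K (fun k => x k ^ 2) + SK K (fun k => y k ^ 2)) / 2))
    with (SK K (fun k => cG * (tau k ^ 2 + (x k ^ 2 + y k ^ 2) / 2))).
  - apply SK_abs. intros k. apply pw2. apply cG_nonneg. apply Gbound.
  - rewrite SK_scal. f_equal. rewrite (SK_ext K _ (fun k => tau k ^ 2 + / 2 * (x k ^ 2 + y k ^ 2))).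
    + rewrite SK_plus, SK_scal, SK_plus. field.
    + intros; field.
Qed.

Lemma dpw k : dplus_x dx w k = (dplus_x dx x k + dplus_x dx y k) / 2.
Proof. unfold dplus_x, w, Mf. field. lra. Qed.

Lemma BS3 : Rabs S3 <= T2 / 2 + (B' + B) / 4.
Proof.
  unfold S3, T2, B', B.
  replace (SK K (fun k => dplus_x dx tau k ^ 2) / 2 + (SK K (fun k => dplus_x dx x k ^ 2) + SK K (fun k => dplus_x dx y k ^ 2)) / 4)
    with (SK K (fun k => dplus_x dx tau k ^ 2 / 2 + (dplus_x dx x k ^ 2 + dplus_x dx y k ^ 2) / 4)).
  - apply SK_abs. intros k. rewrite dpw. apply pw3.
  - rewrite (SK_ext K _ (fun k => / 2 * dplus_x dx tau k ^ 2 + / 4 * (dplus_x dx x k ^ 2 + dplus_x dx y k ^ 2))).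
    + rewrite SK_plus, !SK_scal, SK_plus. field.
    + intros; field.
Qed.

Lemma BS5 : Rabs S5 <= T1 / 2 + (A' + A) / 4.
Proof.
  unfold S5, T1, A', A.
  replace (SK K (fun k => tau k ^ 2) / 2 + (SK K (fun k => x k ^ 2) + SK K (fun k => y k ^ 2)) / 4)
    with (SK K (fun k => tau k ^ 2 / 2 + (x k ^ 2 + y k ^ 2) / 4)).
  - apply SK_abs. intros k. unfold w, Mf. apply pw3.
  - rewrite (SK_ext K _ (fun k => / 2 * tau k ^ 2 + / 4 * (x k ^ 2 + y k ^ 2))).
    + rewrite SK_plus, !SK_scal, SK_plus. field.
    + intros; field.
Qed.

Lemma d1w k : d1_x dx w k = (dplus_x dx w k + dplus_x dx w (k - 1)%Z) / 2.
Proof. unfold d1_x, dplus_x. rewrite Z.sub_add. field. lra. Qed.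

Lemma BS4 : Rabs S4 <= cG / 2 * (A' + A) + cG / 2 * (B' + B).
Proof.
  pose proof cG_nonneg as HcG.
  set (p := dplus_x dx w).
  assert (Hp : per K (fun k => p k ^ 2)).
  { intros k. unfold p. rewrite (per_dp K dx w pw). reflexivity. }
  assert (HP : SK K (fun k => p k ^ 2) <= (B' + B) / 2).
  { unfold B', B. rewrite <- SK_plus.
    replace ((SK K (fun k => dplus_x dx x k ^ 2 + dplus_x dx y k ^ 2)) / 2)
      with (SK K (fun k => / 2 * (dplus_x dx x k ^ 2 + dplus_x dx y k ^ 2))) by (rewrite SK_scal; field).
    apply SK_le. intros k. unfold p. rewrite dpw.
    pose proof (sq_nonneg (dplus_x dx x k - dplus_x dx y k)). nra. }
  assert (Hs4 : Rabs S4 <= SK K (fun k => cG / 2 * (x k ^ 2 + y k ^ 2 + p k ^ 2 + p (k - 1)%Z ^ 2))).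
  { unfold S4. apply SK_abs. intros k. rewrite d1w. apply pw4; auto. apply Gbound. }
  rewrite SK_scal in Hs4.
  rewrite (SK_ext K _ (fun k => (x k ^ 2 + y k ^ 2) + (p k ^ 2 + (fun j => p j ^ 2) (k - 1)%Z))) in Hs4
    by (intros; simpl; ring).
  rewrite !SK_plus in Hs4. rewrite (SK_shiftm K (fun j => p j ^ 2) HK Hp) in Hs4.
  fold A' A in Hs4.
  assert (0 <= cG / 2 * (B' + B) - cG / 2 * (2 * SK K (fun k => p k ^ 2))).
  { rewrite <- Rmult_minus_distr_l. apply Rmult_le_pos; lra. }
  lra.
Qed.

Lemma step_ineq :
  En K dx alpha beta sg Kc x at' - En K dx alpha beta sg Kc y bt <=
  dt * ((Rabs alpha * M1 / 4 + Rabs alpha * cG / 12 + Kc * Rabs alpha * cG / 6 + Kc / 2) * (A' + A)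
        + (Rabs beta / 4 + Kc * Rabs alpha * cG / 6) * (B' + B)
        + (Rabs alpha * cG / 6 + Kc) * T1 + (Rabs beta / 2) * T2).
Proof.
  pose proof I1 as HI1. pose proof I2 as HI2.
  assert (Hsa : Rabs sg = 1) by (destruct Hsg as [-> | ->]; [apply Rabs_R1| apply Rabs_m1]).
  assert (Hdiff : En K dx alpha beta sg Kc x at' - En K dx alpha beta sg Kc y bt
     = (sg * (alpha / 6)) * S1 + (- (sg * dt * (alpha / 6))) * S2 + (- (sg * dt * beta)) * S3
       + (2 * Kc * dt * (alpha / 6)) * S4 + (- (2 * Kc * dt)) * S5).
  { unfold En. fold B' B Ph' Ph A' A.
    transitivity (sg * (alpha / 6 * (Ph' - Ph - S1) + beta * ((B' - B) / 2)) + sg * (alpha / 6) * S1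
                  + 2 * Kc * ((A' - A) / 2)).
    - field.
    - rewrite HI1, HI2. field. }
  rewrite Hdiff.
  pose proof (term_bound (sg * (alpha / 6)) _ _ BS1) as t1.
  pose proof (term_bound (- (sg * dt * (alpha / 6))) _ _ BS2) as t2.
  pose proof (term_bound (- (sg * dt * beta)) _ _ BS3) as t3.
  pose proof (term_bound (2 * Kc * dt * (alpha / 6)) _ _ BS4) as t4.
  pose proof (term_bound (- (2 * Kc * dt)) _ _ BS5) as t5.
  assert (Ha6 : Rabs (alpha / 6) = Rabs alpha / 6).
  { unfold Rdiv. rewrite Rabs_mult, (Rabs_pos_eq (/ 6)) by lra. reflexivity. }
  rewrite Rabs_mult, Hsa, Ha6 in t1.
  rewrite Rabs_Ropp, !Rabs_mult, Hsa, Ha6, (Rabs_pos_eq dt) in t2 by lra.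
  rewrite Rabs_Ropp, !Rabs_mult, Hsa, (Rabs_pos_eq dt) in t3 by lra.
  rewrite !Rabs_mult, Ha6, (Rabs_pos_eq dt), (Rabs_pos_eq Kc), (Rabs_pos_eq 2) in t4 by lra.
  rewrite Rabs_Ropp, !Rabs_mult, (Rabs_pos_eq dt), (Rabs_pos_eq Kc), (Rabs_pos_eq 2) in t5 by lra.
  lra.
Qed.

End Step.

Lemma link (Df : nat -> nat -> R -> R -> R) alpha beta dx ht tm k :
  dx <> 0 -> ht <> 0 ->
  Df 1%nat 0%nat tm (IZR k * dx) = - alpha * Df 0%nat 0%nat tm (IZR k * dx) * Df 0%nat 1%nat tm (IZR k * dx)
      + beta * Df 0%nat 3%nat tm (IZR k * dx) ->
  resid alpha beta dx (2 * ht) (fun j => Df 0%nat 0%nat (tm + ht) (IZR j * dx))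
      (fun j => Df 0%nat 0%nat (tm - ht) (IZR j * dx)) k
  = Tlin Df tm ht dx beta (IZR k * dx) + alpha * Tnl Df Df tm ht dx (IZR k * dx).
Proof.
  intros Hdx Hht HPDE.
  unfold resid, d1_x, d2_x, Nf, Mf, Tlin, d3v, Tnl, Nt, V.
  rewrite !Zp1m1, !Z.sub_add, !Rplus_0_r.
  assert (E1 : IZR (k + 1 + 1) * dx = IZR k * dx + 2 * dx) by (rewrite !plus_IZR; ring).
  assert (E2 : IZR (k + 1) * dx = IZR k * dx + dx) by (rewrite !plus_IZR; ring).
  assert (E3 : IZR (k - 1 - 1) * dx = IZR k * dx + - (2 * dx)) by (rewrite !minus_IZR; ring).
  assert (E4 : IZR (k - 1) * dx = IZR k * dx + - dx) by (rewrite !minus_IZR; ring).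
  rewrite E1, E2, E3, E4.
  rewrite HPDE. field. auto.
Qed.

Lemma bnd_weak E T J J' Mb : (J' <= J)%nat -> bnd E T J Mb -> bnd E T J' Mb.
Proof. intros HJ HB i j t x Hi Hj Ht. apply HB; auto. lia. Qed.

Lemma cons_bounds (Df : nat -> nat -> R -> R -> R) T Mb alpha beta dx ht tm :
  tower2 Df -> bnd Df T 6 Mb -> 0 <= Mb -> 0 < dx -> 0 < ht -> 0 <= tm - ht -> tm + ht <= T ->
  (forall x, Rabs (Tlin Df tm ht dx beta x + alpha * Tnl Df Df tm ht dx x)
     <= (Mb * (1 + Rabs beta) + 2 * Rabs alpha * Mb * Mb) * ((2 * ht) ^ 2 + dx ^ 2)) /\
  (forall x, Rabs (((Tlin Df tm ht dx beta (x + dx) + alpha * Tnl Df Df tm ht dx (x + dx))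
                    - (Tlin Df tm ht dx beta x + alpha * Tnl Df Df tm ht dx x)) / dx)
     <= (Mb * (1 + Rabs beta) + 2 * Rabs alpha * Mb * Mb) * ((2 * ht) ^ 2 + dx ^ 2)).
Proof.
  intros HD HB HMb Hdx Hht H0 HT.
  set (Lb := Mb * ht ^ 2 / 6 + Rabs beta * (Mb * dx ^ 2 / 3 + Mb * ht ^ 2 / 2)).
  set (Nb := Mb * Mb * (dx ^ 2 + 2 * ht ^ 2)).
  assert (L1 : forall E x, tower2 E -> bnd E T 5 Mb -> Rabs (Tlin E tm ht dx beta x) <= Lb).
  { intros E x HE HBE. apply (Tlin_bound E T 5 Mb tm ht dx beta x HE HBE ltac:(lia) Hht Hdx H0 HT). }
  assert (L2 : forall F G x, tower2 F -> tower2 G -> bnd F T 5 Mb -> bnd G T 5 Mb -> Rabs (Tnl F G tm ht dx x) <= Nb).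
  { intros F G x HF HG HBF HBG. apply (Tnl_bound F G T 5 Mb tm ht dx x HF HG HBF HBG ltac:(lia) Hht Hdx H0 HT). }
  assert (Hnum : Lb + Rabs alpha * (2 * Nb) <= (Mb * (1 + Rabs beta) + 2 * Rabs alpha * Mb * Mb) * ((2 * ht) ^ 2 + dx ^ 2)).
  { unfold Lb, Nb.
    pose proof (Rabs_pos alpha). pose proof (Rabs_pos beta).
    assert (0 <= Mb * ht ^ 2) by (apply Rmult_le_pos; [lra| apply pow_le; lra]).
    assert (0 <= Mb * dx ^ 2) by (apply Rmult_le_pos; [lra| apply pow_le; lra]).
    assert (0 <= Rabs beta * (Mb * ht ^ 2)) by (apply Rmult_le_pos; lra).
    assert (0 <= Rabs beta * (Mb * dx ^ 2)) by (apply Rmult_le_pos; lra).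
    assert (0 <= Rabs alpha * (Mb * Mb * ht ^ 2)) by (apply Rmult_le_pos; [lra| apply Rmult_le_pos; [nra| apply pow_le; lra]]).
    assert (0 <= Rabs alpha * (Mb * Mb * dx ^ 2)) by (apply Rmult_le_pos; [lra| apply Rmult_le_pos; [nra| apply pow_le; lra]]).
    assert (Rabs beta * (Mb * dx ^ 2 / 3 + Mb * ht ^ 2 / 2) = Rabs beta * (Mb * dx ^ 2) / 3 + Rabs beta * (Mb * ht ^ 2) / 2) by field.
    lra. }
  assert (HNb : 0 <= Nb).
  { unfold Nb. apply Rmult_le_pos; [nra|]. pose proof (pow2_ge_0 dx). pose proof (pow2_ge_0 ht). lra. }
  assert (HB5 : bnd Df T 5 Mb) by (apply (bnd_weak Df T 6); auto).
  pose proof (shiftF_tower Df dx HD) as HS. pose proof (diffF_tower Df dx HD) as HDf.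
  assert (HBS : bnd (shiftF Df dx) T 5 Mb) by (apply shiftF_bnd; auto).
  assert (HBD : bnd (diffF Df dx) T 5 Mb) by (apply diffF_bnd; auto).
  pose proof (Rabs_pos alpha).
  split.
  - intros x. eapply Rle_trans; [|exact Hnum].
    eapply Rle_trans. apply Rabs_triang. rewrite Rabs_mult.
    pose proof (L1 Df x HD HB5). pose proof (L2 Df Df x HD HD HB5 HB5).
    assert (Rabs alpha * Rabs (Tnl Df Df tm ht dx x) <= Rabs alpha * Nb) by (apply Rmult_le_compat_l; auto).
    assert (Rabs alpha * Nb <= Rabs alpha * (2 * Nb)) by (apply Rmult_le_compat_l; lra).
    lra.
  - intros x. rewrite Tlin_shift, Tnl_shift.
    replace ((Tlin (shiftF Df dx) tm ht dx beta x + alpha * Tnl (shiftF Df dx) (shiftF Df dx) tm ht dx x -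
       (Tlin Df tm ht dx beta x + alpha * Tnl Df Df tm ht dx x)) / dx)
      with (Tlin (diffF Df dx) tm ht dx beta x + alpha * (Tnl (diffF Df dx) (shiftF Df dx) tm ht dx x + Tnl Df (diffF Df dx) tm ht dx x)).
    2:{ replace (Tlin (shiftF Df dx) tm ht dx beta x + alpha * Tnl (shiftF Df dx) (shiftF Df dx) tm ht dx x -
       (Tlin Df tm ht dx beta x + alpha * Tnl Df Df tm ht dx x))
        with ((Tlin (shiftF Df dx) tm ht dx beta x - Tlin Df tm ht dx beta x)
              + alpha * (Tnl (shiftF Df dx) (shiftF Df dx) tm ht dx x - Tnl Df Df tm ht dx x)) by ring.
        rewrite Tlin_lin, Tnl_lin by lra. field. lra. }
    eapply Rle_trans; [|exact Hnum].
    eapply Rle_trans. apply Rabs_triang. rewrite Rabs_mult.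
    pose proof (L1 (diffF Df dx) x HDf HBD).
    pose proof (L2 (diffF Df dx) (shiftF Df dx) x HDf HS HBD HBS).
    pose proof (L2 Df (diffF Df dx) x HD HDf HB5 HBD).
    assert (Rabs (Tnl (diffF Df dx) (shiftF Df dx) tm ht dx x + Tnl Df (diffF Df dx) tm ht dx x) <= 2 * Nb).
    { eapply Rle_trans. apply Rabs_triang. lra. }
    assert (Rabs alpha * Rabs (Tnl (diffF Df dx) (shiftF Df dx) tm ht dx x + Tnl Df (diffF Df dx) tm ht dx x)
      <= Rabs alpha * (2 * Nb)) by (apply Rmult_le_compat_l; auto).
    lra.
Qed.

Lemma exp_pow_le a n : 0 <= a -> (1 + a) ^ n <= exp (INR n * a).
Proof.
  intros Ha. induction n as [|n IH].
  - simpl. rewrite Rmult_0_l, exp_0. lra.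
  - rewrite S_INR. replace ((INR n + 1) * a) with (INR n * a + a) by ring.
    rewrite exp_plus. simpl. rewrite Rmult_comm.
    apply Rmult_le_compat; try lra.
    + apply pow_le. lra.
    + apply exp_ineq1_le.
Qed.

Lemma gronwall (Es : nat -> R) (lam dt Y : R) N :
  0 <= lam -> 0 <= dt -> 0 <= Y -> Es O = 0 ->
  (forall n, (n < N)%nat -> Es (S n) <= (1 + lam * dt) * Es n + dt * Y) ->
  forall n, (n <= N)%nat -> Es n <= INR n * dt * Y * (1 + lam * dt) ^ n.
Proof.
  intros Hl Hd HY H0 Hstep n. induction n as [|n IH]; intros Hn.
  - rewrite H0. simpl. lra.
  - assert (IH' := IH ltac:(lia)). specialize (Hstep n ltac:(lia)).
    assert (Hq : 1 <= (1 + lam * dt) ^ n).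
    { apply pow_R1_Rle. nra. }
    assert (0 <= lam * dt) by nra.
    eapply Rle_trans. exact Hstep.
    rewrite S_INR. simpl pow.
    assert ((1 + lam * dt) * Es n <= (1 + lam * dt) * (INR n * dt * Y * (1 + lam * dt) ^ n))
      by (apply Rmult_le_compat_l; lra).
    assert (0 <= INR n * dt * Y * (1 + lam * dt) ^ n).
    { apply Rmult_le_pos; [apply Rmult_le_pos; [apply Rmult_le_pos; [apply pos_INR| lra]| lra]| lra]. }
    assert (dt * Y <= dt * Y * ((1 + lam * dt) * (1 + lam * dt) ^ n)).
    { rewrite <- Rmult_1_r at 1. apply Rmult_le_compat_l; [nra|]. nra. }
    nra.
Qed.

Lemma per_Zmul K (v : Z -> R) : per K v -> forall k q, v (k + q * Z.of_nat K)%Z = v k.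
Proof.
  intros HP.
  assert (Hn : forall k m, v (k + Z.of_nat m * Z.of_nat K)%Z = v k).
  { intros k m. induction m as [|m IH].
    - f_equal. lia.
    - replace (k + Z.of_nat (S m) * Z.of_nat K)%Z with (k + Z.of_nat m * Z.of_nat K + Z.of_nat K)%Z by lia.
      rewrite HP. exact IH. }
  intros k q. destruct (Z_le_gt_dec 0 q) as [H|H].
  - rewrite <- (Z2Nat.id q H). apply Hn.
  - rewrite <- (Hn (k + q * Z.of_nat K)%Z (Z.to_nat (- q))). f_equal. lia.
Qed.

Lemma gnorm_inf_bound K v Bd : (1 <= K)%nat -> per K v -> gnorm_inf K v <= Bd -> forall k, Rabs (v k) <= Bd.
Proof.
  intros HK HP Hg k.
  set (Kz := Z.of_nat K).
  assert (HKz : (0 < Kz)%Z) by (unfold Kz; lia).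
  set (i := ((k - 1) mod Kz + 1)%Z).
  assert (Hi : (1 <= i <= Kz)%Z) by (unfold i; pose proof (Z.mod_pos_bound (k - 1) Kz HKz); lia).
  assert (Hk : k = (i + ((k - 1) / Kz) * Kz)%Z).
  { unfold i. pose proof (Z.div_mod (k - 1) Kz ltac:(lia)). lia. }
  rewrite Hk. unfold Kz. rewrite per_Zmul; auto.
  eapply Rle_trans; [|exact Hg]. unfold gnorm_inf.
  replace i with (Z.of_nat (Z.to_nat i)) by lia.
  apply (fold_max_in (fun j => Rabs (v (Z.of_nat j)))).
  apply in_seq. lia.
Qed.

Lemma En_coer K dx alpha beta sg Kc (e ut : Z -> R) r rho :
  sg * beta = Rabs beta -> (sg = 1 \/ sg = -1) ->
  (forall k, Rabs (ut k) <= r) -> (forall k, Rabs (e k) <= rho) ->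
  Kc = Rabs alpha / 6 * (3 * r + rho) + 1 ->
  Rabs beta / 2 * SK K (fun k => dplus_x dx e k ^ 2) + SK K (fun k => e k ^ 2)
    <= En K dx alpha beta sg Kc e ut.
Proof.
  intros Hsb Hsg Hu He HKc. unfold En.
  assert (HPhi : Rabs (SK K (fun k => phi (ut k) (e k))) <= (3 * r + rho) * SK K (fun k => e k ^ 2)).
  { rewrite <- SK_scal. apply SK_abs. intros k. unfold phi.
    replace (3 * ut k * e k ^ 2 + e k ^ 3) with (e k ^ 2 * (3 * ut k + e k)) by ring.
    rewrite Rabs_mult, (Rabs_pos_eq (e k ^ 2)) by apply pow2_ge_0.
    rewrite Rmult_comm. apply Rmult_le_compat_r; [apply pow2_ge_0|].
    eapply Rle_trans. apply Rabs_triang. rewrite Rabs_mult, (Rabs_pos_eq 3) by lra.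
    pose proof (Hu k). pose proof (He k). lra. }
  assert (Hsa : Rabs sg = 1) by (destruct Hsg as [-> | ->]; [apply Rabs_R1| apply Rabs_m1]).
  pose proof (term_bound (- (sg * (alpha / 6))) _ _ HPhi) as Ht.
  rewrite Rabs_Ropp, Rabs_mult, Hsa in Ht.
  assert (Ha6 : Rabs (alpha / 6) = Rabs alpha / 6).
  { unfold Rdiv. rewrite Rabs_mult, (Rabs_pos_eq (/ 6)) by lra. reflexivity. }
  rewrite Ha6 in Ht.
  replace (sg * (beta / 2)) with (Rabs beta / 2) by (rewrite <- Hsb; field).
  rewrite HKc. lra.
Qed.

Lemma pde_D (Df : nat -> nat -> R -> R -> R) alpha beta t x : tower2 Df ->
  Derive (fun s => Df 0%nat 0%nat s x) t =
       - alpha * Df 0%nat 0%nat t x * Derive (fun y => Df 0%nat 0%nat t y) x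
       + beta * Derive_n (fun y => Df 0%nat 0%nat t y) 3 x ->
  Df 1%nat 0%nat t x = - alpha * Df 0%nat 0%nat t x * Df 0%nat 1%nat t x + beta * Df 0%nat 3%nat t x.
Proof.
  intros HD H.
  assert (D1 : Derive (fun s => Df 0%nat 0%nat s x) t = Df 1%nat 0%nat t x)
    by (apply is_derive_unique; apply HD).
  assert (D2 : Derive (fun y => Df 0%nat 0%nat t y) x = Df 0%nat 1%nat t x)
    by (apply is_derive_unique; apply HD).
  rewrite D1, D2 in H.
  pose proof (tower_Derive_n 3 (xt Df 0 0 t) (tower_xt Df 0 0 t 3 HD) 3 ltac:(lia) x) as H3.
  unfold xt in H3. simpl Nat.add in H3. rewrite H3 in H. exact H.
Qed.

Lemma tau_bounds (Df : nat -> nat -> R -> R -> R) T Mb alpha beta dx dt n :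
  tower2 Df -> bnd Df T 6 Mb -> 0 <= Mb -> 0 < dx -> 0 < dt -> INR (S n) * dt <= T ->
  (forall t x, 0 <= t <= T -> Df 1%nat 0%nat t x = - alpha * Df 0%nat 0%nat t x * Df 0%nat 1%nat t x + beta * Df 0%nat 3%nat t x) ->
  forall k,
  Rabs (resid alpha beta dx dt (fun j => Df 0%nat 0%nat (INR (S n) * dt) (IZR j * dx))
          (fun j => Df 0%nat 0%nat (INR n * dt) (IZR j * dx)) k)
    <= (Mb * (1 + Rabs beta) + 2 * Rabs alpha * Mb * Mb) * (dt ^ 2 + dx ^ 2) /\
  Rabs (dplus_x dx (resid alpha beta dx dt (fun j => Df 0%nat 0%nat (INR (S n) * dt) (IZR j * dx))
          (fun j => Df 0%nat 0%nat (INR n * dt) (IZR j * dx))) k)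
    <= (Mb * (1 + Rabs beta) + 2 * Rabs alpha * Mb * Mb) * (dt ^ 2 + dx ^ 2).
Proof.
  intros HD HB HMb Hdx Hdt HTn HP k.
  set (tm := INR n * dt + dt / 2). set (ht := dt / 2).
  assert (E1 : (fun j => Df 0%nat 0%nat (INR (S n) * dt) (IZR j * dx)) = (fun j => Df 0%nat 0%nat (tm + ht) (IZR j * dx))).
  { apply functional_extensionality. intros j. f_equal. unfold tm, ht. rewrite S_INR. field. }
  assert (E2 : (fun j => Df 0%nat 0%nat (INR n * dt) (IZR j * dx)) = (fun j => Df 0%nat 0%nat (tm - ht) (IZR j * dx))).
  { apply functional_extensionality. intros j. f_equal. unfold tm, ht. field. }
  assert (E3 : dt = 2 * ht) by (unfold ht; field).
  rewrite E1, E2. rewrite E3 at 1 3.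
  assert (Hn0 : 0 <= INR n * dt) by (apply Rmult_le_pos; [apply pos_INR| lra]).
  rewrite S_INR in HTn.
  assert (Hht : 0 < ht) by (unfold ht; lra).
  assert (H0 : 0 <= tm - ht) by (unfold tm, ht; lra).
  assert (HT' : tm + ht <= T) by (unfold tm, ht; lra).
  assert (Hlink : forall j, resid alpha beta dx (2 * ht) (fun j0 => Df 0%nat 0%nat (tm + ht) (IZR j0 * dx))
      (fun j0 => Df 0%nat 0%nat (tm - ht) (IZR j0 * dx)) j
      = Tlin Df tm ht dx beta (IZR j * dx) + alpha * Tnl Df Df tm ht dx (IZR j * dx)).
  { intros j. apply link; try lra. apply HP. lra. }
  destruct (cons_bounds Df T Mb alpha beta dx ht tm HD HB HMb Hdx Hht H0 HT') as [C1 C2].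
  replace (dt ^ 2) with ((2 * ht) ^ 2) by (rewrite E3; reflexivity).
  split.
  - rewrite Hlink. apply C1.
  - unfold dplus_x. rewrite !Hlink.
    replace (IZR (k + 1) * dx) with (IZR k * dx + dx) by (rewrite plus_IZR; ring).
    apply C2.
Qed.

Lemma gron_step E E' A A' B B' T1 T2 cA cB cT1 cT2 c0 dt W :
  E' - E <= dt * (cA * (A' + A) + cB * (B' + B) + cT1 * T1 + cT2 * T2) ->
  c0 * (A + B) <= E -> c0 * (A' + B') <= E' ->
  0 <= A -> 0 <= B -> 0 <= A' -> 0 <= B' -> T1 <= W -> T2 <= W ->
  0 <= cA -> 0 <= cB -> 0 <= cT1 -> 0 <= cT2 -> 0 < c0 -> 0 < dt -> 0 <= W ->
  dt * ((cA + cB) / c0) <= 1 / 2 ->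
  E' <= (1 + 4 * ((cA + cB) / c0) * dt) * E + dt * (2 * ((cT1 + cT2) * W)).
Proof.
  intros H HE HE' HA HB HA' HB' HT1 HT2 HcA HcB HcT1 HcT2 Hc0 Hdt HW Hz.
  set (lam := (cA + cB) / c0) in *.
  assert (Hlam : 0 <= lam) by (unfold lam; apply Rdiv_le_0_compat; lra).
  assert (H1 : cA * (A' + A) + cB * (B' + B) <= lam * (E + E')).
  { assert (cA * (A' + A) + cB * (B' + B) <= (cA + cB) * ((A + B) + (A' + B'))) by nra.
    assert ((cA + cB) * ((A + B) + (A' + B')) = lam * (c0 * (A + B) + c0 * (A' + B'))) by (unfold lam; field; lra).
    assert (lam * (c0 * (A + B) + c0 * (A' + B')) <= lam * (E + E')) by (apply Rmult_le_compat_l; lra).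
    lra. }
  assert (H2 : cT1 * T1 + cT2 * T2 <= (cT1 + cT2) * W).
  { assert (cT1 * T1 <= cT1 * W) by (apply Rmult_le_compat_l; lra).
    assert (cT2 * T2 <= cT2 * W) by (apply Rmult_le_compat_l; lra). lra. }
  set (Y0 := (cT1 + cT2) * W) in *.
  assert (H3 : E' - E <= dt * (lam * (E + E')) + dt * Y0).
  { eapply Rle_trans. exact H. rewrite <- Rmult_plus_distr_l. apply Rmult_le_compat_l; lra. }
  set (z := lam * dt).
  assert (Hz0 : 0 <= z) by (unfold z; nra).
  assert (Hz1 : z <= 1 / 2) by (unfold z; rewrite Rmult_comm; exact Hz).
  assert (H4 : E' * (1 - z) <= E * (1 + z) + dt * Y0) by (unfold z; nra).
  assert (HE0 : 0 <= E) by nra.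
  assert (HY0 : 0 <= Y0) by (unfold Y0; apply Rmult_le_pos; lra).
  apply Rmult_le_reg_r with (1 - z); [lra|].
  eapply Rle_trans. exact H4.
  assert (0 <= E * (2 * z * (1 - 2 * z))) by (apply Rmult_le_pos; nra).
  assert (0 <= dt * Y0 * (1 - 2 * z)) by (apply Rmult_le_pos; [apply Rmult_le_pos; lra| lra]).
  replace (4 * lam * dt) with (4 * z) by (unfold z; ring).
  nra.
Qed.

Theorem theorem3p2 (L T alpha beta q r : R) (u : R -> R -> R) :
  0 < L -> 0 < T -> beta <> 0 -> 1 < q ->
  smooth2 u ->
  (forall t x, u t (x + L) = u t x) ->
  (forall t x, 0 <= t <= T ->
     Derive (fun s => u s x) t =
       - alpha * u t x * Derive (fun y => u t y) x
       + beta * Derive_n (fun y => u t y) 3 x) ->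
  (exists s, s < r /\ forall t x, 0 <= t <= T -> Rabs (u t x) <= s) ->
  exists C delta : R, 0 < C /\ 0 < delta /\
  forall (K M M0 : nat) (U : nat -> Z -> R),
    (0 < K)%nat -> (0 < M)%nat -> (M0 < M)%nat ->
    let dx := L / INR K in
    let dt := T / INR M in
    dt <= dx -> dt <= delta ->
    (forall n k, U n (k + Z.of_nat K)%Z = U n k) ->
    (forall k, U O k = u 0 (IZR k * dx)) ->
    (forall n, (n < M0)%nat -> scheme_step alpha beta dx dt (U n) (U (S n))) ->
    (forall m, (m <= M0)%nat -> gnorm_inf K (U m) <= r) ->
    dt < Rmin (scheme_eps1 alpha beta q r dx) (scheme_eps2 alpha beta q r dx) ->
    scheme_step alpha beta dx dt (U M0) (U (S M0)) ->
    gnorm_inf K (U (S M0)) <= q * r ->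
    forall m, (m <= S M0)%nat ->
      gnorm_H1 K dx (fun k => U m k - u (INR m * dt) (IZR k * dx))
        <= C * (dt ^ 2 + dx ^ 2).
Proof.
  intros HL HT Hbeta Hq Hsm Hper Hpde [s [Hsr Hsb]].
  destruct Hsm as [Df [HD00 HDd]]. subst u.
  assert (HD : tower2 Df) by (intros i j t x; split; apply HDd).
  assert (HC : forall i j p, continuous (fun p : R * R => Df i j (fst p) (snd p)) p).
  { intros i j [t x]. apply HDd. }
  destruct (D_global_bnd Df L T HL HD Hper HC) as [Mb [HMb HBnd]].
  assert (Hs0 : 0 <= s) by (pose proof (Hsb 0 0 ltac:(lra)); pose proof (Rabs_pos (Df 0%nat 0%nat 0 0)); lra).
  assert (Hr : 0 < r) by lra.
  set (R0 := q * r).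
  set (rho := R0 + r).
  set (cG := 2 * R0 + 2 * r).
  set (Kc := Rabs alpha / 6 * (3 * r + rho) + 1).
  set (sg := if Rlt_dec 0 beta then 1 else -1).
  assert (Hsg : sg = 1 \/ sg = -1) by (unfold sg; destruct Rlt_dec; auto).
  assert (Hsgb : sg * beta = Rabs beta).
  { unfold sg. destruct Rlt_dec as [H|H].
    - rewrite Rabs_pos_eq; lra.
    - rewrite Rabs_left; [ring|]. destruct (Rtotal_order beta 0) as [H'|[H'|H']]; lra. }
  set (cA := Rabs alpha * Mb / 4 + Rabs alpha * cG / 12 + Kc * Rabs alpha * cG / 6 + Kc / 2).
  set (cB := Rabs beta / 4 + Kc * Rabs alpha * cG / 6).
  set (cT1 := Rabs alpha * cG / 6 + Kc).
  set (cT2 := Rabs beta / 2).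
  set (c0 := Rmin 1 (Rabs beta / 2)).
  assert (Hbpos : 0 < Rabs beta) by (apply Rabs_pos_lt; auto).
  assert (Hc0 : 0 < c0) by (unfold c0; apply Rmin_glb_lt; lra).
  pose proof (Rabs_pos alpha) as Hapos.
  assert (HcG : 0 <= cG) by (unfold cG, R0; nra).
  assert (HKc : 0 <= Kc) by (unfold Kc, rho, R0; apply Rplus_le_le_0_compat; [apply Rmult_le_pos; nra| lra]).
  assert (HcA : 0 <= cA) by (unfold cA; assert (0 <= Rabs alpha * Mb) by nra; assert (0 <= Rabs alpha * cG) by nra;
     assert (0 <= Kc * Rabs alpha * cG) by (apply Rmult_le_pos; nra); lra).
  assert (HcB : 0 <= cB) by (unfold cB; assert (0 <= Kc * Rabs alpha * cG) by (apply Rmult_le_pos; nra); lra).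
  assert (HcT1 : 0 <= cT1) by (unfold cT1; assert (0 <= Rabs alpha * cG) by nra; lra).
  assert (HcT2 : 0 <= cT2) by (unfold cT2; lra).
  set (lam := (cA + cB) / c0).
  assert (Hlam : 0 <= lam) by (unfold lam; apply Rdiv_le_0_compat; lra).
  set (Ct := Mb * (1 + Rabs beta) + 2 * Rabs alpha * Mb * Mb).
  set (Q := 2 * T * (cT1 + cT2) * L * Ct ^ 2 * exp (4 * lam * T) / c0).
  assert (HQ : 0 <= Q).
  { unfold Q. apply Rdiv_le_0_compat; [|lra].
    apply Rmult_le_pos; [|apply Rlt_le, exp_pos].
    apply Rmult_le_pos; [|apply pow2_ge_0]. apply Rmult_le_pos; [|lra]. apply Rmult_le_pos; lra. }
  exists (sqrt Q + 1), (1 / (2 * lam + 2)).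
  split; [pose proof (sqrt_pos Q); lra|].
  split; [apply Rdiv_lt_0_compat; lra|].
  intros K M M0 U HK HM HM0 dx dt Hdtdx Hdtd HperU HU0 Hsteps Hbnds Heps HlastStep HlastBnd m Hm.
  assert (HK1 : (1 <= K)%nat) by lia.
  assert (HKpos : 0 < INR K) by (apply lt_0_INR; lia).
  assert (HMpos : 0 < INR M) by (apply lt_0_INR; lia).
  assert (Hdx : 0 < dx) by (unfold dx; apply Rdiv_lt_0_compat; lra).
  assert (Hdt : 0 < dt) by (unfold dt; apply Rdiv_lt_0_compat; lra).
  assert (HKdx : INR K * dx = L) by (unfold dx; field; lra).
  assert (HMdt : INR M * dt = T) by (unfold dt; field; lra).
  assert (Htime : forall n, (n <= M)%nat -> 0 <= INR n * dt <= T).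
  { intros n Hn. split. apply Rmult_le_pos; [apply pos_INR| lra].
    rewrite <- HMdt. apply Rmult_le_compat_r; [lra| apply le_INR; auto]. }
  set (ut := fun (n : nat) (k : Z) => Df 0%nat 0%nat (INR n * dt) (IZR k * dx)).
  assert (Hput : forall n, per K (ut n)).
  { intros n k. unfold ut. rewrite plus_IZR, <- INR_IZR_INZ.
    replace ((IZR k + INR K) * dx) with (IZR k * dx + L) by (rewrite <- HKdx; ring).
    apply (D_per Df L HD Hper). }
  assert (HpU : forall n, per K (U n)) by (intros n k; apply HperU).
  assert (Hut : forall n, (n <= M)%nat -> forall k, Rabs (ut n k) <= r).
  { intros n Hn k. unfold ut. pose proof (Hsb (INR n * dt) (IZR k * dx) (Htime n Hn)). lra. }
  assert (HrR0 : r <= R0) by (unfold R0; nra).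
  assert (HUb : forall n, (n <= S M0)%nat -> forall k, Rabs (U n k) <= R0).
  { intros n Hn k. destruct (Nat.eq_dec n (S M0)) as [->|Hne].
    - apply (gnorm_inf_bound K (U (S M0)) R0 HK1 (HpU _) HlastBnd).
    - pose proof (gnorm_inf_bound K (U n) r HK1 (HpU _) (Hbnds n ltac:(lia)) k). lra. }
  set (Es := fun n => En K dx alpha beta sg Kc (fun k => U n k - ut n k) (ut n)).
  set (Aof := fun n => SK K (fun k => (U n k - ut n k) ^ 2)).
  set (Bof := fun n => SK K (fun k => dplus_x dx (fun k0 => U n k0 - ut n k0) k ^ 2)).
  assert (HA0 : forall n, 0 <= Aof n) by (intros; apply SK_nonneg; intros; apply pow2_ge_0).
  assert (HB0 : forall n, 0 <= Bof n) by (intros; apply SK_nonneg; intros; apply pow2_ge_0).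
  assert (Hcoer : forall n, (n <= S M0)%nat -> c0 * (Aof n + Bof n) <= Es n).
  { intros n Hn.
    assert (H := En_coer K dx alpha beta sg Kc (fun k => U n k - ut n k) (ut n) r rho Hsgb Hsg
       (Hut n ltac:(lia))).
    assert (He : forall k, Rabs (U n k - ut n k) <= rho).
    { intros k. unfold Rminus. eapply Rle_trans. apply Rabs_triang. rewrite Rabs_Ropp.
      pose proof (HUb n Hn k). pose proof (Hut n ltac:(lia) k). unfold rho. lra. }
    specialize (H He eq_refl). fold (Aof n) (Bof n) in H. unfold Es.
    assert (c0 <= 1) by apply Rmin_l. assert (c0 <= Rabs beta / 2) by apply Rmin_r.
    pose proof (HA0 n). pose proof (HB0 n).
    assert (c0 * Aof n <= 1 * Aof n) by (apply Rmult_le_compat_r; lra).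
    assert (c0 * Bof n <= Rabs beta / 2 * Bof n) by (apply Rmult_le_compat_r; lra).
    change (SK K (fun k : Z => (fun k0 : Z => U n k0 - ut n k0) k ^ 2)) with (Aof n) in H. lra. }
  set (eps := dt ^ 2 + dx ^ 2).
  assert (Heps0 : 0 < eps) by (unfold eps; pose proof (pow_lt dt 2 Hdt); pose proof (pow_lt dx 2 Hdx); lra).
  set (W := INR K * (Ct * eps) ^ 2).
  assert (HW : 0 <= W) by (unfold W; apply Rmult_le_pos; [lra| apply pow2_ge_0]).
  assert (HPD : forall t x, 0 <= t <= T ->
     Df 1%nat 0%nat t x = - alpha * Df 0%nat 0%nat t x * Df 0%nat 1%nat t x + beta * Df 0%nat 3%nat t x).
  { intros t x Ht. apply pde_D; auto. }
  assert (Hz : dt * lam <= 1 / 2).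
  { assert (dt * lam <= 1 / (2 * lam + 2) * lam) by (apply Rmult_le_compat_r; lra).
    assert (1 / (2 * lam + 2) * lam <= 1 / 2).
    { apply Rmult_le_reg_r with (2 * lam + 2); [lra|].
      replace (1 / (2 * lam + 2) * lam * (2 * lam + 2)) with lam by (field; lra). lra. }
    lra. }
  assert (Hstep : forall n, (n < S M0)%nat -> Es (S n) <= (1 + 4 * lam * dt) * Es n + dt * (2 * ((cT1 + cT2) * W))).
  { intros n Hn.
    assert (Hs : scheme_step alpha beta dx dt (U n) (U (S n))).
    { destruct (Nat.eq_dec n M0) as [->|Hne]; [exact HlastStep| apply Hsteps; lia]. }
    assert (HTn : INR (S n) * dt <= T) by (apply Htime; lia).
    assert (Hab : forall k, Rabs (ut (S n) k - ut n k) <= dt * Mb).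
    { intros k. unfold ut.
      pose proof (tdiff_bound Df T 6 Mb 0 0 (INR n * dt) (INR (S n) * dt) (IZR k * dx) HD HBnd
        ltac:(lia) ltac:(lia) ltac:(apply Rmult_le_pos; [apply pos_INR| lra])
        ltac:(apply Rmult_le_compat_r; [lra| apply le_INR; lia]) HTn) as H.
      rewrite S_INR in H |- *. replace ((INR n + 1) * dt - INR n * dt) with dt in H by ring. lra. }
    pose proof (step_ineq K dx dt alpha beta r R0 Mb sg Kc (U (S n)) (U n) (ut (S n)) (ut n)
      HK1 Hdx Hdt Hsg HKc (HpU _) (HpU _) (Hput _) (Hput _) Hs (HUb (S n) ltac:(lia)) (HUb n ltac:(lia))
      (Hut (S n) ltac:(lia)) (Hut n ltac:(lia)) Hab) as HSI.
    fold cG in HSI.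
    pose proof (tau_bounds Df T Mb alpha beta dx dt n HD HBnd HMb Hdx Hdt HTn HPD) as Htau.
    fold Ct eps in Htau.
    assert (HT1 : SK K (fun k => resid alpha beta dx dt (ut (S n)) (ut n) k ^ 2) <= W).
    { unfold W. rewrite <- SK_const by auto. apply SK_le. intros k.
      destruct (Htau k) as [H1 _]. rewrite <- (pow2_abs (resid _ _ _ _ _ _ k)).
      apply pow_incr. split; [apply Rabs_pos| exact H1]. }
    assert (HT2 : SK K (fun k => dplus_x dx (resid alpha beta dx dt (ut (S n)) (ut n)) k ^ 2) <= W).
    { unfold W. rewrite <- SK_const by auto. apply SK_le. intros k.
      destruct (Htau k) as [_ H1]. rewrite <- (pow2_abs (dplus_x dx _ k)).
      apply pow_incr. split; [apply Rabs_pos| exact H1]. }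
    refine (gron_step _ _ _ _ _ _ _ _ cA cB cT1 cT2 c0 dt W HSI _ _ _ _ _ _ HT1 HT2 HcA HcB HcT1 HcT2 Hc0 Hdt HW _).
    - exact (Hcoer n ltac:(lia)).
    - exact (Hcoer (S n) ltac:(lia)).
    - apply HA0.
    - apply HB0.
    - apply HA0.
    - apply HB0.
    - fold lam. lra. }
  assert (HE0 : Es O = 0).
  { assert (He0 : forall k, U O k - ut O k = 0).
    { intros k. rewrite HU0. unfold ut. simpl INR. rewrite Rmult_0_l. ring. }
    unfold Es, En.
    rewrite (SK_ext K (fun k => dplus_x dx (fun k0 => U 0%nat k0 - ut 0%nat k0) k ^ 2) (fun _ => 0)).
    2:{ intros k. unfold dplus_x. rewrite !He0. unfold Rdiv. ring. }
    rewrite (SK_ext K (fun k => phi (ut 0%nat k) (U 0%nat k - ut 0%nat k)) (fun _ => 0)).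
    2:{ intros k. rewrite He0. unfold phi. ring. }
    rewrite (SK_ext K (fun k => (U 0%nat k - ut 0%nat k) ^ 2) (fun _ => 0)).
    2:{ intros k. rewrite He0. ring. }
    rewrite SK_const by auto. ring. }
  set (Y := 2 * ((cT1 + cT2) * W)).
  assert (HY : 0 <= Y) by (unfold Y; apply Rmult_le_pos; [lra| apply Rmult_le_pos; lra]).
  assert (Hgr := gronwall Es (4 * lam) dt Y (S M0) ltac:(lra) ltac:(lra) HY HE0 Hstep m Hm).
  assert (HmT : INR m * dt <= T) by (apply Htime; lia).
  assert (Hm0 : 0 <= INR m * dt) by (apply Htime; lia).
  assert (Hpow : (1 + 4 * lam * dt) ^ m <= exp (4 * lam * T)).
  { eapply Rle_trans. apply exp_pow_le. nra.
    assert (INR m * (4 * lam * dt) <= 4 * lam * T) by nra.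
    destruct (Rle_lt_or_eq_dec _ _ H) as [H'|H'].
    - apply Rlt_le, exp_increasing, H'.
    - rewrite H'. lra. }
  assert (HEm : Es m <= T * Y * exp (4 * lam * T)).
  { eapply Rle_trans. exact Hgr.
    assert (0 <= (1 + 4 * lam * dt) ^ m) by (apply pow_le; nra).
    assert (INR m * dt * Y <= T * Y) by (apply Rmult_le_compat_r; lra).
    assert (0 <= T * Y) by (apply Rmult_le_pos; lra).
    apply Rle_trans with (T * Y * (1 + 4 * lam * dt) ^ m).
    - apply Rmult_le_compat_r; lra.
    - apply Rmult_le_compat_l; lra. }
  assert (HAB : dx * (Aof m + Bof m) <= Q * eps ^ 2).
  { pose proof (Hcoer m Hm) as Hc.
    assert (Aof m + Bof m <= T * Y * exp (4 * lam * T) / c0).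
    { apply Rmult_le_reg_l with c0; [lra|]. replace (c0 * (T * Y * exp (4 * lam * T) / c0)) with (T * Y * exp (4 * lam * T)) by (field; lra).
      lra. }
    apply Rle_trans with (dx * (T * Y * exp (4 * lam * T) / c0)).
    - apply Rmult_le_compat_l; lra.
    - right. unfold Q, Y, W. rewrite <- HKdx. field. lra. }
  unfold gnorm_H1, gnorm.
  change (sum_f_R0 (fun i : nat => (U m (Z.of_nat (S i)) - Df 0%nat 0%nat (INR m * dt) (IZR (Z.of_nat (S i)) * dx)) ^ 2 * dx) (K - 1))
    with (SK K (fun k => (U m k - ut m k) ^ 2 * dx)).
  change (sum_f_R0 (fun i : nat => dplus_x dx (fun k : Z => U m k - Df 0%nat 0%nat (INR m * dt) (IZR k * dx)) (Z.of_nat (S i)) ^ 2 * dx) (K - 1))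
    with (SK K (fun k => dplus_x dx (fun k0 => U m k0 - ut m k0) k ^ 2 * dx)).
  rewrite (SK_ext K (fun k => (U m k - ut m k) ^ 2 * dx) (fun k => dx * (U m k - ut m k) ^ 2)) by (intros; ring).
  rewrite (SK_ext K (fun k => dplus_x dx (fun k0 => U m k0 - ut m k0) k ^ 2 * dx)
                    (fun k => dx * dplus_x dx (fun k0 => U m k0 - ut m k0) k ^ 2)) by (intros; ring).
  rewrite !SK_scal. fold (Aof m) (Bof m).
  pose proof (HA0 m). pose proof (HB0 m).
  rewrite !pow2_sqrt by (apply Rmult_le_pos; lra).
  apply Rle_trans with (sqrt (Q * eps ^ 2)).
  - apply sqrt_le_1_alt. lra.
  - rewrite sqrt_mult by (auto; apply pow2_ge_0). rewrite sqrt_pow2 by lra.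
    fold eps. apply Rmult_le_compat_r; lra.
Qed.
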